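(* Fix $N\ge1$ and let $\mathit{PIPE}$ be the buffer of capacity $N+2$ defined below. Then $\mathit{PIPE}$ has no catastrophic cycle, its asymptotic performance is $2$, and for every $n\ge1$, $rp_{\mathit{PIPE}}(n)=2n+(N+1)$.
   Context: PAFAS setting. Let $\mathcal A$ be an infinite set of visible actions containing a distinguished success action $\omega$, the actions $in,out$, and all further action names used below (all pairwise distinct); $\tau\notin\mathcal A$ is the internal action and $\mathcal A_\tau=\mathcal A\cup\{\tau\}$. For every $\alpha\in\mathcal A_\tau$ there is an urgent version $\underline{\alpha}$. A general relabelling function is a map $\Phi:\mathcal A_\tau\to\mathcal A_\tau$ with $\Phi(\tau)=\tau$ such that $\{\alpha\mid \emptyset\neq\Phi^{-1}(\alpha)\neq\{\alpha\}\}$ is finite. Processes are the closed terms, guarded (every variable $x$ in $\mu x.P$ occurs only within the scope of some prefix), of the grammar $P::=\mathbf 0\mid \gamma.P\mid P+P\mid P\|_A P\mid P[\Phi]\mid x\mid \mu x.P$, where $\gamma\in\{\alpha,\underline\alpha\}$ for some $\alpha\in\mathcal A_\tau$, $A\subseteq\mathcal A$, $\Phi$ a general relabelling function; systems of defining equations $X\equiv\ldots$ abbreviate recursive $\mu$-terms, and a trailing $\mathbf 0$ may be omitted. There are action transitions $P\xrightarrow{\alpha}P'$ ($\alpha\in\mathcal A_\tau$) and time steps $P\xrightarrow{X}P'$ ($X\subseteq\mathcal A$), defined as the least relations closed under the rules: (1) $\alpha.P\xrightarrow{\alpha}P$ and $\underline\alpha.P\xrightarrow{\alpha}P$; (2)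 if $P_1\xrightarrow{\alpha}P_1'$ then $P_1+P_2\xrightarrow{\alpha}P_1'$ and $P_2+P_1\xrightarrow{\alpha}P_1'$; (3) if $\alpha\notin A$ and $P_1\xrightarrow{\alpha}P_1'$ then $P_1\|_AP_2\xrightarrow{\alpha}P_1'\|_AP_2$ and $P_2\|_AP_1\xrightarrow{\alpha}P_2\|_AP_1'$; (4) if $\alpha\in A$, $P_1\xrightarrow{\alpha}P_1'$, $P_2\xrightarrow{\alpha}P_2'$ then $P_1\|_AP_2\xrightarrow{\alpha}P_1'\|_AP_2'$; (5) if $P\xrightarrow{\alpha}P'$ then $P[\Phi]\xrightarrow{\Phi(\alpha)}P'[\Phi]$; (6) if $P\{\mu x.P/x\}\xrightarrow{\alpha}P'$ then $\mu x.P\xrightarrow{\alpha}P'$; (7) $\mathbf 0\xrightarrow{X}\mathbf 0$; (8) $\alpha.P\xrightarrow{X}\underline\alpha.P$; (9) if $\alpha\notin X\cup\{\tau\}$ then $\underline\alpha.P\xrightarrow{X}\underline\alpha.P$; (10) if $P_i\xrightarrow{X_i}P_i'$ for $i=1,2$ and $X\subseteq (A\cap(X_1\cup X_2))\cup((X_1\cap X_2)\setminus A)$ then $P_1\|_AP_2\xrightarrow{X}P_1'\|_AP_2'$; (11) if $P_1\xrightarrow{X}P_1'$ and $P_2\xrightarrow{X}P_2'$ then $P_1+P_2\xrightarrow{X}P_1'+P_2'$; (12) if $P\xrightarrow{\Phi^{-1}(X\cup\{\tau\})\setminus\{\tau\}}P'$ then $P[\Phi]\xrightarrow{X}P'[\Phi]$;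 (13) if $P\{\mu x.P/x\}\xrightarrow{X}P'$ then $\mu x.P\xrightarrow{X}P'\{\mu x.P/x\}$. A full time step is a time step with $X=\mathcal A$, written $\xrightarrow{1}$. $P\|Q$ abbreviates $P\|_{\mathcal A\setminus\{\omega\}}Q$, and for $B\subseteq\mathcal A$, $P/B$ denotes $P[\Phi_B]$ with $\Phi_B(\alpha)=\tau$ for $\alpha\in B$ and $\Phi_B(\alpha)=\alpha$ otherwise. The set $\mathrm{DL}(P)$ of discrete traces consists of all sequences obtained from a sequence $w\in(\mathcal A_\tau\cup\{1\})^*$ of consecutive action transitions and full time steps starting at $P$ by deleting all $\tau$'s; for such a $v$, $\zeta(v)$ is the number of occurrences of $1$ in $v$. Users: $U_1\equiv\underline{in}.\underline{out}.\underline{\omega}$ and $U_n\equiv U_{n-1}\|_{\{\omega\}}\underline{in}.\underline{out}.\underline{\omega}$ for $n>1$. The response performance of $P$ is $rp_P(n)=\sup\{\zeta(v)\mid v\in\mathrm{DL}(P\|U_n),\ \omega\text{ does not occur in }v\}\in\mathbb N_0\cup\{\infty\}$ for $n\ge1$. A catastrophic cycle of $P$ is a cycle, in the transition graph of processes reachable from $P$ (restricted to transitions that can participate in a full time step when $P$ runs in parallel with some $U_n$), that contains at least one time step but no $in$ and no $out$ transition; the asymptotic performance is the constant $a$ with $rp_P(n)=an+\Theta(1)$. Definition of PIPE: let $C\equiv in.C'$, $C'\equiv out.C$. For $i=0,\dots,N+1$ let $C_i\equiv C[\Phi_i]$ where $\Phi_i(in)=\delta_i$ if $0\le i\le N$,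 $\Phi_i(out)=\delta_{i-1}$ if $1\le i\le N+1$, and $\Phi_i(\alpha)=\alpha$ otherwise ($\delta_0,\dots,\delta_N$ are fresh visible actions). With $A=\{\delta_0,\dots,\delta_N\}$, $\mathit{PIPE}\equiv\big(\cdots((C_0\|_{\{\delta_0\}}C_1)\|_{\{\delta_1\}}C_2)\cdots\|_{\{\delta_N\}}C_{N+1}\big)/A$. *)

(* Defs.v *)
From Stdlib Require Import List Arith Lia QArith Qabs.
Import ListNotations.
Open Scope nat_scope.

(* The infinite set of visible actions: omega, in, out, the fresh actions
   delta_i, and infinitely many further actions (all pairwise distinct). *)
Inductive Act : Type :=
| omega
| act_in
| act_out
| delta (i : nat)
| other (k : nat).

Inductive ActT : Type :=
| tau
| vis (a : Act).

Definition ASet := Act -> Prop.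

Definition fullset : ASet := fun _ => True.

Definition inA (A : ASet) (a : ActT) : Prop :=
  match a with tau => False | vis b => A b end.

(* Pre false a P = a.P ; Pre true a P = (urgent a).P ;
   Par A P Q = P ||_A Q ; Rel f P = P[f] ; Mu x P = mu x. P *)
Inductive Proc : Type :=
| Nil
| Pre (urgent : bool) (a : ActT) (P : Proc)
| Sum (P Q : Proc)
| Par (A : ASet) (P Q : Proc)
| Rel (f : ActT -> ActT) (P : Proc)
| Var (x : nat)
| Mu (x : nat) (P : Proc).

(* general relabelling functions (side condition of the grammar) *)
Definition general_relabelling (f : ActT -> ActT) : Prop :=
  f tau = tau /\
  exists l : list Act, forall a : Act,
    ((exists b, f (vis b) = vis a) /\ ~ (forall b, f (vis b) = vis a <-> b = a)) ->
    In a l.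

(* substitution P{Q/x} (only used with closed Q) *)
Fixpoint subst (x : nat) (Q0 : Proc) (P : Proc) : Proc :=
  match P with
  | Nil => Nil
  | Pre u a P1 => Pre u a (subst x Q0 P1)
  | Sum P1 P2 => Sum (subst x Q0 P1) (subst x Q0 P2)
  | Par A P1 P2 => Par A (subst x Q0 P1) (subst x Q0 P2)
  | Rel f P1 => Rel f (subst x Q0 P1)
  | Var y => if Nat.eqb x y then Q0 else Var y
  | Mu y P1 => if Nat.eqb x y then Mu y P1 else Mu y (subst x Q0 P1)
  end.

Inductive astep : Proc -> ActT -> Proc -> Prop :=
| as_pre : forall u a P, astep (Pre u a P) a P
| as_suml : forall a P1 P1' P2, astep P1 a P1' -> astep (Sum P1 P2) a P1'
| as_sumr : forall a P1 P1' P2, astep P1 a P1' -> astep (Sum P2 P1) a P1'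
| as_parl : forall A a P1 P1' P2,
    ~ inA A a -> astep P1 a P1' -> astep (Par A P1 P2) a (Par A P1' P2)
| as_parr : forall A a P1 P1' P2,
    ~ inA A a -> astep P1 a P1' -> astep (Par A P2 P1) a (Par A P2 P1')
| as_sync : forall (A : ASet) b P1 P1' P2 P2',
    A b -> astep P1 (vis b) P1' -> astep P2 (vis b) P2' ->
    astep (Par A P1 P2) (vis b) (Par A P1' P2')
| as_rel : forall f a P P', astep P a P' -> astep (Rel f P) (f a) (Rel f P')
| as_mu : forall x a P P', astep (subst x (Mu x P) P) a P' -> astep (Mu x P) a P'.

Inductive tstep : Proc -> ASet -> Proc -> Prop :=
| ts_nil : forall X, tstep Nil X Nil
| ts_pre : forall X a P, tstep (Pre false a P) X (Pre true a P)
| ts_urg : forall X a P, a <> tau -> ~ inA X a ->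
    tstep (Pre true a P) X (Pre true a P)
| ts_par : forall (A X X1 X2 : ASet) P1 P1' P2 P2',
    tstep P1 X1 P1' -> tstep P2 X2 P2' ->
    (forall b, X b -> (A b /\ (X1 b \/ X2 b)) \/ (X1 b /\ X2 b /\ ~ A b)) ->
    tstep (Par A P1 P2) X (Par A P1' P2')
| ts_sum : forall X P1 P1' P2 P2',
    tstep P1 X P1' -> tstep P2 X P2' -> tstep (Sum P1 P2) X (Sum P1' P2')
| ts_rel : forall f X P P',
    (* f^{-1}(X u {tau}) \ {tau} *)
    tstep P (fun b => f (vis b) = tau \/ inA X (f (vis b))) P' ->
    tstep (Rel f P) X (Rel f P')
| ts_mu : forall x X P P',
    tstep (subst x (Mu x P) P) X P' ->
    tstep (Mu x P) X (subst x (Mu x P) P').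

Definition fstep (P P' : Proc) : Prop := tstep P fullset P'.

Inductive DItem : Type :=
| DAct (a : Act)
| DOne.

Inductive DL : Proc -> list DItem -> Prop :=
| dl_nil : forall P, DL P []
| dl_tau : forall P P' v, astep P tau P' -> DL P' v -> DL P v
| dl_vis : forall P a P' v, astep P (vis a) P' -> DL P' v -> DL P (DAct a :: v)
| dl_time : forall P P' v, fstep P P' -> DL P' v -> DL P (DOne :: v).

Fixpoint zeta (v : list DItem) : nat :=
  match v with
  | [] => 0
  | DOne :: w => S (zeta w)
  | DAct _ :: w => zeta w
  end.

Definition notOmega : ASet := fun b => b <> omega.
Definition onlyOmega : ASet := fun b => b = omega.

(* P || Q = P ||_{A \ {omega}} Q *)
Definition parT (P P2 : Proc) : Proc := Par notOmega P P2.

Definition user1 : Proc :=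
  Pre true (vis act_in) (Pre true (vis act_out) (Pre true (vis omega) Nil)).

(* U n = U_n for n >= 1 (U 0 is an irrelevant dummy) *)
Fixpoint U (n : nat) : Proc :=
  match n with
  | 0 => user1
  | S m => match m with
           | 0 => user1
           | S _ => Par onlyOmega (U m) user1
           end
  end.

Inductive natinf : Type :=
| fin (k : nat)
| inf.

Definition le_ni (x y : natinf) : Prop :=
  match x, y with
  | _, inf => True
  | inf, fin _ => False
  | fin a, fin b => a <= b
  end.

Definition is_sup (S : nat -> Prop) (r : natinf) : Prop :=
  (forall k, S k -> le_ni (fin k) r) /\
  (forall r', (forall k, S k -> le_ni (fin k) r') -> le_ni r r').

Definition rp_set (P : Proc) (n : nat) (k : nat) : Prop :=
  exists v, DL (parT P (U n)) v /\ ~ In (DAct omega) v /\ zeta v = k.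

(* rp P n r  <->  rp_P(n) = r *)
Definition rp (P : Proc) (n : nat) (r : natinf) : Prop :=
  is_sup (rp_set P n) r.

(* rp_P(n) = a n + Theta(1) *)
Definition asymptotic_performance (P : Proc) (a : Q) : Prop :=
  exists (c1 c2 : Q) (n0 : nat),
    (0 < c1)%Q /\
    forall n : nat, 1 <= n -> n0 <= n ->
      exists k : nat, rp P n (fin k) /\
        (c1 <= Qabs (inject_Z (Z.of_nat k) - a * inject_Z (Z.of_nat n)) <= c2)%Q.

Inductive reach_nw : Proc -> Proc -> Prop :=
| rn_refl : forall S, reach_nw S S
| rn_act : forall S a S' T, astep S a S' -> a <> vis omega ->
    reach_nw S' T -> reach_nw S T
| rn_time : forall S S' T, fstep S S' -> reach_nw S' T -> reach_nw S T.

Definition joint_reach (P Q0 R : Proc) : Prop :=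
  exists n, 1 <= n /\ reach_nw (parT P (U n)) (parT Q0 R).

(* time steps X (of P) and X2 (of the users) combine, via rule (10) with
   synchronisation set A \ {omega}, to a full time step *)
Definition full_comb (X X2 : ASet) : Prop :=
  forall b, (b <> omega /\ (X b \/ X2 b)) \/ (X b /\ X2 b /\ b = omega).

Inductive Lab : Type :=
| LA (a : ActT)
| LT (X : ASet).

Definition admissible (P Q0 : Proc) (l : Lab) (Q1 : Proc) : Prop :=
  match l with
  | LA a => astep Q0 a Q1 /\
      exists R, joint_reach P Q0 R /\
        (a = tau \/ exists b R', a = vis b /\ b <> omega /\ astep R (vis b) R')
  | LT X => tstep Q0 X Q1 /\
      exists R X2 R', joint_reach P Q0 R /\ tstep R X2 R' /\ full_comb X X2
  end.

Inductive apath (P : Proc) : Proc -> list Lab -> Proc -> Prop :=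
| ap_nil : forall Q0, apath P Q0 [] Q0
| ap_cons : forall Q0 l Q1 ls Q2,
    admissible P Q0 l Q1 -> apath P Q1 ls Q2 -> apath P Q0 (l :: ls) Q2.

Definition is_time (l : Lab) : Prop :=
  match l with LT _ => True | LA _ => False end.

Definition is_inout (l : Lab) : Prop :=
  l = LA (vis act_in) \/ l = LA (vis act_out).

Definition has_catastrophic_cycle (P : Proc) : Prop :=
  exists Q0 pre ls,
    apath P P pre Q0 /\ apath P Q0 ls Q0 /\
    (exists l, In l ls /\ is_time l) /\
    (forall l, In l ls -> ~ is_inout l).

Definition C : Proc :=
  Mu 0 (Pre false (vis act_in) (Pre false (vis act_out) (Var 0))).

Definition phi (N i : nat) (a : ActT) : ActT :=
  match a with
  | vis act_in => if i <=? N then vis (delta i) else vis act_in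
  | vis act_out => if 1 <=? i then vis (delta (i - 1)) else vis act_out
  | _ => a
  end.

Definition Ci (N i : nat) : Proc := Rel (phi N i) C.

Fixpoint chain (N k : nat) : Proc :=
  match k with
  | 0 => Ci N 0
  | S j => Par (fun b => b = delta j) (chain N j) (Ci N (S j))
  end.

(* hiding of {delta_0, ..., delta_N} *)
Definition hideD (N : nat) (a : ActT) : ActT :=
  match a with
  | vis (delta i) => if i <=? N then tau else a
  | _ => a
  end.

Definition PIPE (N : nat) : Proc := Rel (hideD N) (chain N (S N)).

(* Main.v *)
Require Import Defs.
From Stdlib Require Import List Arith QArith.
From Stdlib Require Import Lia Qabs Classical.
Import ListNotations.
Open Scope nat_scope.

Definition cs (it ur : bool) : Proc :=
  match it, ur with
  | false, false => C
  | false, true => Pre true (vis act_in) (Pre false (vis act_out) C)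
  | true, false => Pre false (vis act_out) C
  | true, true => Pre true (vis act_out) C
  end.

Definition cellT (N i : nat) (x : bool * bool) : Proc := Rel (phi N i) (cs (fst x) (snd x)).

Definition inlab (N i : nat) : Act := if i <=? N then delta i else act_in.
Definition outlab (i : nat) : Act := match i with 0 => act_out | S j => delta j end.
Definition clab (N i : nat) (it : bool) : Act := if it then outlab i else inlab N i.

Lemma phi_in N i : phi N i (vis act_in) = vis (inlab N i).
Proof. unfold phi, inlab. destruct (i <=? N); reflexivity. Qed.
Lemma phi_out N i : phi N i (vis act_out) = vis (outlab i).
Proof. unfold phi, outlab. destruct i; simpl; try reflexivity. rewrite Nat.sub_0_r. reflexivity. Qed.

Lemma inlab_le N i : i <= N -> inlab N i = delta i.
Proof. intro H. unfold inlab. destruct (Nat.leb_spec i N); [reflexivity|lia]. Qed.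
Lemma inlab_SN N : inlab N (S N) = act_in.
Proof. unfold inlab. destruct (Nat.leb_spec (S N) N); [lia|reflexivity]. Qed.

Lemma cs_astep (it ur : bool) a P' : astep (cs it ur) a P' ->
  (it = false /\ a = vis act_in /\ P' = cs true false) \/
  (it = true /\ a = vis act_out /\ P' = cs false false).
Proof.
  destruct it, ur; simpl; intro H; inversion H; subst; auto.
  match goal with H : astep _ _ _ |- _ => simpl in H; inversion H; subst end. auto.
Qed.

Lemma cs_tstep (it ur : bool) (X : ASet) P' : tstep (cs it ur) X P' ->
  P' = cs it true /\ (ur = true -> ~ X (if it then act_out else act_in)).
Proof.
  destruct it, ur; simpl; intro H; inversion H; subst; simpl; try (split; [reflexivity| congruence]).
  - split; [reflexivity|]. intros _ HX. match goal with H : ~ inA _ _ |- _ => apply H end. exact HX.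
  - split; [reflexivity|]. intros _ HX. match goal with H : ~ inA _ _ |- _ => apply H end. exact HX.
  - match goal with H : tstep _ _ _ |- _ => simpl in H; inversion H; subst end. simpl. split; [reflexivity|congruence].
Qed.

Lemma cs_tstep_ex (it ur : bool) (X : ASet) : (ur = true -> ~ X (if it then act_out else act_in)) ->
  tstep (cs it ur) X (cs it true).
Proof.
  destruct it, ur; simpl; intro H.
  - apply ts_urg. congruence. simpl. apply H. reflexivity.
  - apply ts_pre.
  - apply ts_urg. congruence. simpl. apply H. reflexivity.
  - change (Pre true (vis act_in) (Pre false (vis act_out) C)) with
      (subst 0 C (Pre true (vis act_in) (Pre false (vis act_out) C))).
    apply ts_mu. simpl. apply ts_pre.
Qed.

Lemma cell_astep N i x a P' : astep (cellT N i x) a P' ->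
  (fst x = false /\ a = vis (inlab N i) /\ P' = cellT N i (true, false)) \/
  (fst x = true /\ a = vis (outlab i) /\ P' = cellT N i (false, false)).
Proof.
  unfold cellT. intro H. inversion H; subst.
  match goal with H : astep _ _ _ |- _ => apply cs_astep in H; destruct H as [(?&?&?)|(?&?&?)] end; subst.
  - left. rewrite phi_in. auto.
  - right. rewrite phi_out. auto.
Qed.

Lemma cell_tstep N i x (X : ASet) P' : tstep (cellT N i x) X P' ->
  P' = cellT N i (fst x, true) /\ (snd x = true -> ~ X (clab N i (fst x))).
Proof.
  unfold cellT. intro H. inversion H; subst.
  match goal with H : tstep _ _ _ |- _ => apply cs_tstep in H; destruct H as [-> H4] end. split; [reflexivity|].
  intros Hu HX. apply H4; auto. unfold clab. destruct (fst x).
  - right. rewrite phi_out. exact HX.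
  - right. rewrite phi_in. exact HX.
Qed.

Lemma cell_tstep_ex N i x (X : ASet) : (snd x = true -> ~ X (clab N i (fst x))) ->
  tstep (cellT N i x) X (cellT N i (fst x, true)).
Proof.
  intro H. unfold cellT. apply ts_rel. apply cs_tstep_ex.
  intros Hu HH; cbv beta in HH; destruct HH as [Ht|HX]; unfold clab in H; destruct (fst x).
  - rewrite phi_out in Ht; discriminate.
  - rewrite phi_in in Ht; discriminate.
  - rewrite phi_out in HX. apply (H Hu HX).
  - rewrite phi_in in HX. apply (H Hu HX).
Qed.

Lemma tstep_mono P X P' : tstep P X P' -> forall Y : ASet, (forall b, Y b -> X b) -> tstep P Y P'.
Proof.
  induction 1; intros Y HY.
  - apply ts_nil.
  - apply ts_pre.
  - apply ts_urg; auto. destruct a; simpl in *; auto.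
  - eapply ts_par; eauto.
  - apply ts_sum; auto.
  - apply ts_rel. apply IHtstep. intros b [Hb|Hb]; [left; auto|right].
    destruct (f (vis b)); simpl in *; auto.
  - apply ts_mu. auto.
Qed.

Definition cfg := nat -> bool * bool.
Definition upd (c : cfg) (i : nat) (x : bool * bool) : cfg := fun j => if j =? i then x else c j.
Definition fire (c : cfg) (j : nat) : cfg := upd (upd c j (true, false)) (S j) (false, false).
Definition urg (c : cfg) : cfg := fun j => (fst (c j), true).

Fixpoint chainT (N k : nat) (c : cfg) : Proc :=
  match k with
  | 0 => cellT N 0 (c 0)
  | S j => Par (fun b => b = delta j) (chainT N j c) (cellT N (S j) (c (S j)))
  end.

Lemma upd_eq c i x : upd c i x i = x.
Proof. unfold upd. rewrite Nat.eqb_refl. reflexivity. Qed.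
Lemma upd_ne c i x j : j <> i -> upd c i x j = c j.
Proof. intro H. unfold upd. destruct (Nat.eqb_spec j i); [lia|reflexivity]. Qed.

Lemma chainT_ext N k c c' : (forall i, i <= k -> c i = c' i) -> chainT N k c = chainT N k c'.
Proof.
  induction k; intro H; simpl.
  - rewrite H; auto.
  - rewrite IHk by (intros; apply H; lia). rewrite H; auto.
Qed.

Definition enabled_u (c : cfg) (j : nat) : Prop :=
  c j = (false, true) /\ c (S j) = (true, true).

Lemma chain_astep N k c a P' : k <= S N -> astep (chainT N k c) a P' ->
  (exists j, j < k /\ fst (c j) = false /\ fst (c (S j)) = true /\ a = vis (delta j) /\
      P' = chainT N k (fire c j)) \/
  (fst (c k) = false /\ a = vis (inlab N k) /\ P' = chainT N k (upd c k (true, false))) \/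
  (fst (c 0) = true /\ a = vis act_out /\ P' = chainT N k (upd c 0 (false, false))).
Proof.
  revert a P'. induction k; intros a P' Hk H; simpl in H.
  - apply cell_astep in H. destruct H as [(?&?&?)|(?&?&?)]; subst.
    + right; left. simpl. rewrite upd_eq. auto.
    + right; right. simpl. rewrite upd_eq. auto.
  - inversion H; subst.
    +
      match goal with H1 : astep (chainT _ _ _) _ _ |- _ =>
        apply IHk in H1; [rename H1 into HA|lia] end.
      match goal with H1 : ~ inA _ _ |- _ => rename H1 into Hn end.
      destruct HA as [(j&Hj&H1&H2&->&->)|[(H1&->&->)|(H1&->&->)]].
      * left. exists j. repeat split; auto; try lia. simpl.
        replace (fire c j (S k)) with (c (S k)); [reflexivity|unfold fire; rewrite !upd_ne by lia; reflexivity].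
      * exfalso. apply Hn. simpl. rewrite inlab_le by lia. reflexivity.
      * right; right. repeat split; auto.
    + match goal with H1 : astep (cellT _ _ _) _ _ |- _ =>
        apply cell_astep in H1; rename H1 into HA end.
      match goal with H1 : ~ inA _ _ |- _ => rename H1 into Hn end.
      destruct HA as [(H1&->&->)|(H1&->&->)].
      * right; left. repeat split; auto. simpl. rewrite upd_eq.
        f_equal. apply chainT_ext. intros; rewrite upd_ne by lia; reflexivity.
      * exfalso. apply Hn. reflexivity.
    + match goal with H1 : astep (chainT _ _ _) _ _ |- _ =>
        apply IHk in H1; [rename H1 into HA|lia] end.
      match goal with H1 : astep (cellT _ _ _) _ _ |- _ =>
        apply cell_astep in H1; rename H1 into HB end.
      destruct HA as [(j&Hj&H1&H2&Hb&->)|[(H1&Hb&->)|(H1&Hb&->)]];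
      destruct HB as [(H1'&Hb'&->)|(H1'&Hb'&->)]; inversion Hb; inversion Hb'; subst;
        unfold inlab, outlab in *;
        repeat match goal with H : context [?x <=? ?y] |- _ => destruct (Nat.leb_spec x y) end;
        try congruence; try lia;
        try (match goal with H: delta _ = delta _ |- _ => injection H; lia end).
      left. exists k. repeat split; auto. simpl.
      replace (fire c k (S k)) with (false,false) by (unfold fire; rewrite upd_eq; reflexivity). f_equal. apply chainT_ext.
      intros i Hi. unfold fire. rewrite (upd_ne _ (S k)) by lia. reflexivity.
Qed.

Lemma chain_tstep N k c (X : ASet) P' : k <= S N -> tstep (chainT N k c) X P' ->
  P' = chainT N k (urg c) /\ (forall j, j < k -> enabled_u c j -> ~ X (delta j)) /\
  (c k = (false, true) -> ~ X (inlab N k)) /\ (c 0 = (true, true) -> ~ X act_out).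
Proof.
  revert X P'. induction k; intros X P' Hk H; simpl in H.
  - apply cell_tstep in H. destruct H as [-> H]. repeat split.
    + intros j Hj; lia.
    + intros E. rewrite E in H. apply H; reflexivity.
    + intros E. rewrite E in H. apply H; reflexivity.
  - inversion H; subst.
    match goal with H1 : tstep (chainT _ _ _) _ _ |- _ =>
      apply IHk in H1; [destruct H1 as (->&HI1&HI2&HI3)|lia] end.
    match goal with H1 : tstep (cellT _ _ _) _ _ |- _ =>
      apply cell_tstep in H1; destruct H1 as [-> HC] end.
    match goal with H1 : forall b, X b -> _ |- _ => rename H1 into HX end.
    repeat split.
    + intros j Hj [E1 E2] HXj. destruct (HX _ HXj) as [[Ha [Hb|Hb]]|[Hb1 [Hb2 Hb3]]].
      * assert (j = k) by (injection Ha; lia). subst j.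
        apply (HI2 E1). rewrite inlab_le by lia. exact Hb.
      * assert (j = k) by (injection Ha; lia). subst j.
        rewrite E2 in HC. apply HC; auto.
      * assert (j < k \/ j = k) as [Hjk|Hjk] by lia.
        -- apply (HI1 j Hjk); [split; auto|exact Hb1].
        -- subst j. apply Hb3. reflexivity.
    + intros E HXi. rewrite E in HC. destruct (HX _ HXi) as [[Ha _]|[_ [Hb2 _]]].
      * unfold inlab in Ha. destruct (Nat.leb_spec (S k) N); [injection Ha; lia|discriminate].
      * apply (HC eq_refl). exact Hb2.
    + intros E HXo. destruct (HX _ HXo) as [[Ha _]|[Hb1 _]]; [discriminate|].
      apply (HI3 E Hb1).
Qed.

Definition Xc (N k : nat) (c : cfg) : ASet := fun b =>
  ~ (b = inlab N k /\ c k = (false, true)) /\ ~ (b = act_out /\ c 0 = (true, true)).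

Lemma chain_tstep_ex N k c : k <= S N -> (forall j, j < k -> ~ enabled_u c j) ->
  tstep (chainT N k c) (Xc N k c) (chainT N k (urg c)).
Proof.
  induction k; intros Hk HE; simpl.
  - apply cell_tstep_ex. unfold Xc, clab, outlab. destruct (c 0) as [[] []]; simpl; intros Hu [H1 H2]; try discriminate.
    + apply H2; auto.
    + apply H1; auto.
  - apply ts_par with (X1 := Xc N k c)
      (X2 := fun b => ~ (snd (c (S k)) = true /\ b = clab N (S k) (fst (c (S k))))).
    + apply IHk; [lia|]. intros j Hj; apply HE; lia.
    + apply cell_tstep_ex. intros Hu HH; apply HH; auto.
    + intros b [Hb1 Hb2]. unfold Xc.
      assert (Hen := HE k ltac:(lia)). unfold enabled_u in Hen.
      rewrite inlab_le in * by lia.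
      destruct (classic (b = delta k)) as [->|Hne].
      * left. split; [reflexivity|].
        destruct (c k) as [[] []] eqn:Ek; destruct (c (S k)) as [[] []] eqn:ESk;
          unfold clab, outlab in *; simpl;
          try (left; split; intros [? ?]; congruence);
          try (right; intros [? ?]; congruence);
          try (right; intros [? Hx]; unfold inlab in Hx; destruct (Nat.leb_spec (S k) N); [injection Hx; lia|discriminate]).
        exfalso; apply Hen; auto.
      * right. split; [|split; [|exact Hne]].
        -- split; [intros [? ?]; congruence|]. exact Hb2.
        -- intros [Hu Hl]. destruct (c (S k)) as [[] y] eqn:E; simpl in *; unfold clab, outlab in Hl; [congruence|].
           subst. apply Hb1. auto.
Qed.

Lemma cell_in_ex N i x : fst x = false -> astep (cellT N i x) (vis (inlab N i)) (cellT N i (true, false)).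
Proof.
  intro H. unfold cellT. rewrite <- (phi_in N i). apply as_rel. destruct x as [[] u]; simpl in H; try discriminate.
  destruct u; simpl.
  - apply as_pre.
  - apply as_mu. simpl. apply as_pre.
Qed.

Lemma cell_out_ex N i x : fst x = true -> astep (cellT N i x) (vis (outlab i)) (cellT N i (false, false)).
Proof.
  intro H. unfold cellT. rewrite <- (phi_out N i). apply as_rel. destruct x as [[] u]; simpl in H; try discriminate.
  destruct u; simpl; apply as_pre.
Qed.

Lemma chain_in_ex N k c : k <= S N -> fst (c k) = false ->
  astep (chainT N k c) (vis (inlab N k)) (chainT N k (upd c k (true, false))).
Proof.
  destruct k; intros Hk H; simpl.
  - rewrite upd_eq. apply cell_in_ex; auto.
  - rewrite upd_eq. replace (chainT N k (upd c (S k) (true, false))) with (chainT N k c).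
    + apply as_parr; [|apply cell_in_ex; auto]. simpl. unfold inlab.
      destruct (Nat.leb_spec (S k) N); [intro E; injection E; lia|discriminate].
    + apply chainT_ext. intros; rewrite upd_ne by lia; reflexivity.
Qed.

Lemma chain_out_ex N k c : fst (c 0) = true ->
  astep (chainT N k c) (vis act_out) (chainT N k (upd c 0 (false, false))).
Proof.
  induction k; intros H; simpl.
  - rewrite upd_eq. change act_out with (outlab 0). apply cell_out_ex; auto.
  - rewrite upd_ne by lia. apply as_parl; [simpl; discriminate|]. apply IHk; auto.
Qed.

Lemma chain_fire_ex N k c j : k <= S N -> j < k -> fst (c j) = false -> fst (c (S j)) = true ->
  astep (chainT N k c) (vis (delta j)) (chainT N k (fire c j)).
Proof.
  induction k; intros Hk Hj H1 H2; [lia|]. simpl.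
  assert (j < k \/ j = k) as [Hjk | ->] by lia.
  - replace (fire c j (S k)) with (c (S k)) by (unfold fire; rewrite !upd_ne by lia; reflexivity).
    apply as_parl; [simpl; intro E; injection E; lia|]. apply IHk; auto; lia.
  - replace (fire c k (S k)) with (false, false) by (unfold fire; rewrite upd_eq; reflexivity).
    replace (chainT N k (fire c k)) with (chainT N k (upd c k (true, false))).
    + apply as_sync; [reflexivity| |].
      * rewrite <- (inlab_le N k) by lia. apply chain_in_ex; auto; lia.
      * change (delta k) with (outlab (S k)). apply cell_out_ex; auto.
    + apply chainT_ext. intros i Hi. unfold fire. rewrite (upd_ne _ (S k)) by lia. reflexivity.
Qed.

Definition pipeT (N : nat) (c : cfg) : Proc := Rel (hideD N) (chainT N (S N) c).

Lemma hideD_delta N j : j <= N -> hideD N (vis (delta j)) = tau.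
Proof. intro H. simpl. destruct (Nat.leb_spec j N); [reflexivity|lia]. Qed.

Lemma pipe_astep N c a P' : astep (pipeT N c) a P' ->
  (exists j, j <= N /\ fst (c j) = false /\ fst (c (S j)) = true /\ a = tau /\ P' = pipeT N (fire c j)) \/
  (fst (c (S N)) = false /\ a = vis act_in /\ P' = pipeT N (upd c (S N) (true, false))) \/
  (fst (c 0) = true /\ a = vis act_out /\ P' = pipeT N (upd c 0 (false, false))).
Proof.
  unfold pipeT. intro H. inversion H; subst.
  match goal with H1 : astep (Par _ _ _) ?a ?p |- _ =>
    change (astep (chainT N (S N) c) a p) in H1;
    apply chain_astep in H1; [rename H1 into HA|lia] end.
  destruct HA as [(j&Hj&H1&H2&->&->)|[(H1&->&->)|(H1&->&->)]].
  - left. exists j. repeat split; auto; try lia. apply hideD_delta. lia.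
  - right; left. rewrite inlab_SN. auto.
  - right; right. auto.
Qed.

Lemma pipe_tstep N c (X : ASet) P' : tstep (pipeT N c) X P' ->
  P' = pipeT N (urg c) /\ (forall j, j <= N -> ~ enabled_u c j) /\
  (c (S N) = (false, true) -> ~ X act_in) /\ (c 0 = (true, true) -> ~ X act_out).
Proof.
  unfold pipeT. intro H. inversion H; subst.
  match goal with H1 : tstep (Par _ _ _) ?a ?p |- _ =>
    change (tstep (chainT N (S N) c) a p) in H1;
    apply chain_tstep in H1; [destruct H1 as (->&HI1&HI2&HI3)|lia] end.
  repeat split.
  - intros j Hj He. apply (HI1 j ltac:(lia) He). left. apply hideD_delta; auto.
  - intros E HX. apply (HI2 E). rewrite inlab_SN. right. exact HX.
  - intros E HX. apply (HI3 E). right. exact HX.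
Qed.

Definition Xp (N : nat) (c : cfg) : ASet := fun b =>
  ~ (b = act_in /\ c (S N) = (false, true)) /\ ~ (b = act_out /\ c 0 = (true, true)).

Lemma pipe_tstep_ex N c : (forall j, j <= N -> ~ enabled_u c j) ->
  tstep (pipeT N c) (Xp N c) (pipeT N (urg c)).
Proof.
  intro HE. unfold pipeT. apply ts_rel.
  eapply tstep_mono; [apply chain_tstep_ex; [lia|intros j Hj; apply HE; lia]|].
  intros b Hb. unfold Xc. rewrite inlab_SN. split.
  - intros [-> E]. destruct Hb as [Hb|Hb]; simpl in Hb; [discriminate|]. apply (proj1 Hb). auto.
  - intros [-> E]. destruct Hb as [Hb|Hb]; simpl in Hb; [discriminate|]. apply (proj2 Hb). auto.
Qed.

Lemma pipe_fire_ex N c j : j <= N -> fst (c j) = false -> fst (c (S j)) = true ->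
  astep (pipeT N c) tau (pipeT N (fire c j)).
Proof.
  intros Hj H1 H2. unfold pipeT. rewrite <- (hideD_delta N j Hj). apply as_rel.
  apply chain_fire_ex; auto; lia.
Qed.

Lemma pipe_in_ex N c : fst (c (S N)) = false ->
  astep (pipeT N c) (vis act_in) (pipeT N (upd c (S N) (true, false))).
Proof.
  intros H. unfold pipeT. change (vis act_in) with (hideD N (vis act_in)). apply as_rel.
  rewrite <- (inlab_SN N). apply chain_in_ex; auto.
Qed.

Lemma pipe_out_ex N c : fst (c 0) = true ->
  astep (pipeT N c) (vis act_out) (pipeT N (upd c 0 (false, false))).
Proof.
  intros H. unfold pipeT. change (vis act_out) with (hideD N (vis act_out)). apply as_rel.
  apply chain_out_ex; auto.
Qed.

Lemma PIPE_eq N : PIPE N = pipeT N (fun _ => (false, false)).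
Proof.
  unfold PIPE, pipeT. f_equal. generalize (S N). induction n; simpl; auto.
  rewrite IHn. reflexivity.
Qed.

Definition ust (p : nat) : Proc :=
  match p with
  | 0 => Pre true (vis act_in) (Pre true (vis act_out) (Pre true (vis omega) Nil))
  | 1 => Pre true (vis act_out) (Pre true (vis omega) Nil)
  | _ => Pre true (vis omega) Nil
  end.

Fixpoint usersT (l : list nat) : Proc :=
  match l with
  | [] => Nil
  | p :: l' => match l' with [] => ust p | _ => Par onlyOmega (usersT l') (ust p) end
  end.

Fixpoint cnt (k : nat) (l : list nat) : nat :=
  match l with [] => 0 | x :: l' => (if x =? k then 1 else 0) + cnt k l' end.

Definition ulab (p : nat) : Act := match p with 0 => act_in | 1 => act_out | _ => omega end.

Lemma U_eq n : 1 <= n -> U n = usersT (repeat 0 n).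
Proof.
  induction n; intro H; [lia|]. destruct n; [reflexivity|].
  change (U (S (S n))) with (Par onlyOmega (U (S n)) user1).
  rewrite IHn by lia. reflexivity.
Qed.

Lemma usersT_cons p l : l <> [] -> usersT (p :: l) = Par onlyOmega (usersT l) (ust p).
Proof. destruct l; [congruence|reflexivity]. Qed.

Lemma ust_astep p a P' : astep (ust p) a P' ->
  (p = 0 /\ a = vis act_in /\ P' = ust 1) \/ (p = 1 /\ a = vis act_out /\ P' = ust 2) \/ a = vis omega.
Proof.
  destruct p as [|[|p]]; simpl; intro H; inversion H; subst; auto.
Qed.

Lemma ust_tstep p (X : ASet) P' : tstep (ust p) X P' -> P' = ust p /\ ~ X (ulab p).
Proof.
  destruct p as [|[|p]]; simpl; intro H; inversion H; subst; split; auto.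
Qed.

Lemma ust_tstep_ex p (X : ASet) : ~ X (ulab p) -> tstep (ust p) X (ust p).
Proof.
  destruct p as [|[|p]]; simpl; intro H; apply ts_urg; try discriminate; exact H.
Qed.

Definition ustep (l l' : list nat) (k : nat) : Prop :=
  cnt k l = S (cnt k l') /\ cnt (S k) l' = S (cnt (S k) l) /\
  (forall j, j <> k -> j <> S k -> cnt j l' = cnt j l) /\
  length l' = length l /\ (forall x, In x l' -> In x l \/ x <= 2).

Lemma users_astep l a P' : astep (usersT l) a P' ->
  (a = vis act_in /\ exists l', P' = usersT l' /\ ustep l l' 0) \/
  (a = vis act_out /\ exists l', P' = usersT l' /\ ustep l l' 1) \/ a = vis omega.
Proof.
  revert a P'. induction l as [|p l IH]; intros a P' H.
  - inversion H.
  - destruct l as [|q l1].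
    + simpl in H. apply ust_astep in H as [(->&->&->)|[(->&->&->)| ->]]; auto.
      * left. split; auto. exists [1]. split; auto. unfold ustep; simpl; repeat split; auto.
        intros j H1 H2. destruct j as [|[|j]]; simpl; lia. intros x [<-|[]]; auto.
      * right; left. split; auto. exists [2]. split; auto. unfold ustep; simpl; repeat split; auto.
        intros j H1 H2. destruct j as [|[|[|j]]]; simpl; lia. intros x [<-|[]]; auto.
    + rewrite usersT_cons in H by discriminate.
      remember (usersT (q :: l1)) as UL. remember (ust p) as UP.
      inversion H; subst.
      * match goal with H1 : astep (usersT _) _ _ |- _ => apply IH in H1 as HA end.
        destruct HA as [(->&l'&->&Hs)|[(->&l'&->&Hs)| ->]]; auto.
        -- left. split; auto. exists (p :: l').
           destruct Hs as (S1&S2&S3&S4&S5).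
           rewrite usersT_cons by (intro E; subst; simpl in S4; discriminate).
           split; auto. unfold ustep; simpl in *. repeat split; try lia.
           intros j J1 J2. rewrite S3; auto.
           intros x [<-|Hx]; [tauto|]. destruct (S5 x Hx); tauto.
        -- right; left. split; auto. exists (p :: l').
           destruct Hs as (S1&S2&S3&S4&S5).
           rewrite usersT_cons by (intro E; subst; simpl in S4; discriminate).
           split; auto. unfold ustep; simpl in *. repeat split; try lia.
           intros j J1 J2. rewrite S3; auto.
           intros x [<-|Hx]; [tauto|]. destruct (S5 x Hx); tauto.
      * match goal with H1 : astep (ust _) _ _ |- _ => apply ust_astep in H1 as HA end.
        destruct HA as [(->&->&->)|[(->&->&->)| ->]]; auto.
        -- left. split; auto. exists (1 :: q :: l1). rewrite (usersT_cons 1 (q :: l1)) by discriminate.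
           split; auto. unfold ustep. simpl. repeat split; auto.
           intros j J1 J2. destruct j as [|[|j]]; simpl; lia.
           intros x [<-|Hx]; auto.
        -- right; left. split; auto. exists (2 :: q :: l1). rewrite (usersT_cons 2 (q :: l1)) by discriminate.
           split; auto. unfold ustep. simpl. repeat split; auto.
           intros j J1 J2. destruct j as [|[|[|j]]]; simpl; lia.
           intros x [<-|Hx]; auto.
      * match goal with H1 : onlyOmega _ |- _ => unfold onlyOmega in H1; subst end. auto.
Qed.

Definition bnd (l : list nat) : Prop := forall x, In x l -> x <= 2.

Lemma users_tstep l (X : ASet) P' : tstep (usersT l) X P' ->
  P' = usersT l /\ (In 0 l -> ~ X act_in) /\ (In 1 l -> ~ X act_out) /\
  (l <> [] -> (forall x, In x l -> 2 <= x) -> ~ X omega).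
Proof.
  revert X P'. induction l as [|p l IH]; intros X P' H.
  - inversion H; subst. simpl. repeat split; tauto.
  - destruct l as [|q l1].
    + simpl in H. apply ust_tstep in H as [-> H]. simpl. repeat split.
      * intros [->|[]]. exact H.
      * intros [->|[]]. exact H.
      * intros _ Hall. specialize (Hall p (or_introl eq_refl)).
        destruct p as [|[|p]]; try lia. exact H.
    + rewrite usersT_cons in H by discriminate.
      remember (usersT (q :: l1)) as UL. remember (ust p) as UP.
      inversion H; subst.
      match goal with H1 : tstep (usersT _) _ _ |- _ => apply IH in H1 as (->&HI1&HI2&HI3) end.
      match goal with H1 : tstep (ust _) _ _ |- _ => apply ust_tstep in H1 as (->&HU) end.
      match goal with H1 : forall b, X b -> _ |- _ => rename H1 into HX end.
      rewrite (usersT_cons p (q :: l1)) by discriminate. unfold onlyOmega in HX.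
      repeat split.
      * intros [->|Hin] HXi; destruct (HX _ HXi) as [[? _]|(HX1&HX2&_)]; try discriminate.
        -- exact (HU HX2).
        -- exact (HI1 Hin HX1).
      * intros [->|Hin] HXi; destruct (HX _ HXi) as [[? _]|(HX1&HX2&_)]; try discriminate.
        -- exact (HU HX2).
        -- exact (HI2 Hin HX1).
      * intros _ Hall HXo. destruct (HX _ HXo) as [[_ [HX1|HX2]]|(_&_&Hn)]; [| |apply Hn; reflexivity].
        -- apply (HI3 ltac:(discriminate)); auto. intros x Hx; apply Hall; right; auto.
        -- specialize (Hall p (or_introl eq_refl)). destruct p as [|[|p]]; try lia. exact (HU HX2).
Qed.

Definition Xu (l : list nat) : ASet := fun b =>
  ~ (b = act_in /\ In 0 l) /\ ~ (b = act_out /\ In 1 l) /\ ~ (b = omega /\ forall x, In x l -> 2 <= x).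

Lemma users_tstep_ex l : l <> [] -> tstep (usersT l) (Xu l) (usersT l).
Proof.
  induction l as [|p l IH]; intro Hne; [congruence|].
  destruct l as [|q l1].
  - simpl. apply ust_tstep_ex. unfold Xu. intros (H1&H2&H3).
    destruct p as [|[|p]]; simpl in *.
    + apply H1; auto.
    + apply H2; auto.
    + apply H3. split; auto. intros x [<-|[]]; lia.
  - rewrite usersT_cons by discriminate.
    apply ts_par with (X1 := Xu (q :: l1)) (X2 := fun b => b <> ulab p).
    + apply IH. discriminate.
    + apply ust_tstep_ex. auto.
    + intros b (H1&H2&H3). unfold onlyOmega.
      destruct (classic (b = omega)) as [->|Hb].
      * left. split; auto.
        destruct (classic (forall x, In x (q :: l1) -> 2 <= x)) as [Hall|Hn].
        -- right. intro E. apply H3. split; auto. intros x [<-|Hx]; auto.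
           destruct p as [|[|p]]; simpl in E; try discriminate; lia.
        -- left. unfold Xu. repeat split; try (intros [? ?]; discriminate). intros [_ Ha]. auto.
      * right. split; [|split; auto].
        -- unfold Xu. repeat split.
           ++ intros [-> Hi]. apply H1. split; auto. right; auto.
           ++ intros [-> Hi]. apply H2. split; auto. right; auto.
           ++ intros [-> _]. auto.
        -- intro E. destruct p as [|[|p]]; simpl in E; subst.
           ++ apply H1. split; auto. left; auto.
           ++ apply H2. split; auto. left; auto.
           ++ auto.
Qed.

Lemma users_step_ex l k : k <= 1 -> In k l ->
  exists l', astep (usersT l) (vis (ulab k)) (usersT l') /\ ustep l l' k.
Proof.
  intros Hk. induction l as [|p l IH]; intro Hin; [destruct Hin|].
  destruct (Nat.eq_dec p k) as [->|Hpk].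
  - destruct l as [|q l1].
    + exists [S k]. split.
      * destruct k as [|[|k]]; try lia; simpl; apply as_pre.
      * unfold ustep. simpl. rewrite !Nat.eqb_refl. destruct k as [|[|k]]; try lia; simpl;
        repeat split; auto; try (intros x [<-|[]]; lia);
        intros j J1 J2; destruct j as [|[|[|j]]]; simpl; lia.
    + exists (S k :: q :: l1). split.
      * rewrite (usersT_cons k (q :: l1)) by discriminate.
        rewrite (usersT_cons (S k) (q :: l1)) by discriminate. apply as_parr.
        -- destruct k as [|[|k]]; try lia; simpl; discriminate.
        -- destruct k as [|[|k]]; try lia; simpl; apply as_pre.
      * unfold ustep. simpl. rewrite !Nat.eqb_refl. destruct k as [|[|k]]; try lia; simpl;
        repeat split; auto; try (intros x [<-|Hx]; auto; lia);
        intros j J1 J2; destruct j as [|[|[|j]]]; simpl; lia.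
  - destruct Hin as [E|Hin]; [congruence|].
    destruct l as [|q l1]; [destruct Hin|].
    destruct (IH Hin) as (l'&Ha&(H1&H2&H3&H4&H5)).
    assert (l' <> []) by (intro E; subst; simpl in H4; discriminate).
    exists (p :: l'). split.
    + rewrite (usersT_cons p (q :: l1)) by discriminate.
      rewrite (usersT_cons p l') by auto. apply as_parl; auto.
      destruct k as [|[|k]]; try lia; simpl; discriminate.
    + unfold ustep. simpl in *. destruct (Nat.eqb_spec p k); [congruence|].
      destruct (Nat.eqb_spec p (S k)); simpl; repeat split; try lia.
      * intros j J1 J2. rewrite H3; auto.
      * intros x [<-|Hx]; [tauto|]. destruct (H5 x Hx); tauto.
      * intros j J1 J2. rewrite H3; auto.
      * intros x [<-|Hx]; [tauto|]. destruct (H5 x Hx); tauto.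
Qed.

Definition sys (N : nat) (c : cfg) (l : list nat) : Proc := parT (pipeT N c) (usersT l).

Lemma sys_astep N c l a P' : astep (sys N c l) a P' -> a <> vis omega ->
  (exists j, j <= N /\ fst (c j) = false /\ fst (c (S j)) = true /\ a = tau /\ P' = sys N (fire c j) l) \/
  (exists l', fst (c (S N)) = false /\ a = vis act_in /\ P' = sys N (upd c (S N) (true, false)) l' /\ ustep l l' 0) \/
  (exists l', fst (c 0) = true /\ a = vis act_out /\ P' = sys N (upd c 0 (false, false)) l' /\ ustep l l' 1).
Proof.
  unfold sys, parT. intros H Ho.
  remember (pipeT N c) as PP. remember (usersT l) as UU.
  inversion H; subst.
  - match goal with H1 : astep (pipeT _ _) _ _ |- _ => apply pipe_astep in H1 as HA end.
    match goal with H1 : ~ inA _ _ |- _ => rename H1 into Hn end.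
    destruct HA as [(j&Hj&H1&H2&->&->)|[(H1&->&->)|(H1&->&->)]].
    + left. exists j. auto.
    + exfalso. apply Hn. simpl. unfold notOmega. discriminate.
    + exfalso. apply Hn. simpl. unfold notOmega. discriminate.
  - match goal with H1 : astep (usersT _) _ _ |- _ => apply users_astep in H1 as HA end.
    match goal with H1 : ~ inA _ _ |- _ => rename H1 into Hn end.
    destruct HA as [(->&_)|[(->&_)| ->]].
    + exfalso. apply Hn. simpl. unfold notOmega. discriminate.
    + exfalso. apply Hn. simpl. unfold notOmega. discriminate.
    + congruence.
  - match goal with H1 : astep (pipeT _ _) _ _ |- _ => apply pipe_astep in H1 as HA end.
    match goal with H1 : astep (usersT _) _ _ |- _ => apply users_astep in H1 as HB end.
    destruct HA as [(j&Hj&H1&H2&E&->)|[(H1&E&->)|(H1&E&->)]]; [discriminate| |];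
      injection E as E; subst;
      destruct HB as [(E'&l'&->&Hs)|[(E'&l'&->&Hs)|E']]; try discriminate.
    + right; left. exists l'. auto.
    + right; right. exists l'. auto.
Qed.

Lemma sys_fstep N c l P' : fstep (sys N c l) P' ->
  P' = sys N (urg c) l /\ (forall j, j <= N -> ~ enabled_u c j) /\
  ~ (c (S N) = (false, true) /\ In 0 l) /\ ~ (c 0 = (true, true) /\ In 1 l) /\
  (l <> [] -> ~ (forall x, In x l -> 2 <= x)).
Proof.
  unfold fstep, sys, parT. intros H.
  remember (pipeT N c) as PP. remember (usersT l) as UU.
  inversion H; subst.
  match goal with H1 : tstep (pipeT _ _) _ _ |- _ => apply pipe_tstep in H1 as (->&HP1&HP2&HP3) end.
  match goal with H1 : tstep (usersT _) _ _ |- _ => apply users_tstep in H1 as (->&HU1&HU2&HU3) end.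
  match goal with H1 : forall b, fullset b -> _ |- _ => rename H1 into HX end.
  unfold notOmega in HX.
  repeat split; auto.
  - intros [E Hi]. destruct (HX act_in I) as [[_ [HX1|HX2]]|(_&_&Hn)].
    + exact (HP2 E HX1).
    + exact (HU1 Hi HX2).
    + apply Hn. discriminate.
  - intros [E Hi]. destruct (HX act_out I) as [[_ [HX1|HX2]]|(_&_&Hn)].
    + exact (HP3 E HX1).
    + exact (HU2 Hi HX2).
    + apply Hn. discriminate.
  - intros Hne Hall. destruct (HX omega I) as [[Hn _]|(_&HX2&_)].
    + apply Hn. reflexivity.
    + exact (HU3 Hne Hall HX2).
Qed.

Lemma sys_fstep_ex N c l : l <> [] -> (forall j, j <= N -> ~ enabled_u c j) ->
  ~ (c (S N) = (false, true) /\ In 0 l) -> ~ (c 0 = (true, true) /\ In 1 l) ->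
  ~ (forall x, In x l -> 2 <= x) -> fstep (sys N c l) (sys N (urg c) l).
Proof.
  intros Hne HE Hin Hout Hom. unfold fstep, sys, parT.
  apply ts_par with (X1 := Xp N c) (X2 := Xu l).
  - apply pipe_tstep_ex. exact HE.
  - apply users_tstep_ex. exact Hne.
  - intros b _. unfold notOmega, Xp, Xu.
    destruct (classic (b = omega)) as [->|Hb].
    + right. repeat split; try (intros [? ?]; discriminate); auto.
      intros [_ Ha]. auto.
    + left. split; auto.
      destruct (classic (b = act_in)) as [->|Hb1].
      * destruct (classic (c (S N) = (false, true))) as [E|E].
        -- right. repeat split; try (intros [? ?]; discriminate).
           intros [_ Hi]. apply Hin. auto.
        -- left. split; intros [? ?]; [auto|discriminate].
      * destruct (classic (b = act_out)) as [->|Hb2].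
        -- destruct (classic (c 0 = (true, true))) as [E|E].
           ++ right. repeat split; try (intros [? ?]; discriminate).
              intros [_ Hi]. apply Hout. auto.
           ++ left. split; intros [? ?]; [discriminate|auto].
        -- left. split; intros [? ?]; auto.
Qed.

Lemma sys_fire_ex N c l j : j <= N -> fst (c j) = false -> fst (c (S j)) = true ->
  astep (sys N c l) tau (sys N (fire c j) l).
Proof.
  intros. unfold sys, parT. apply as_parl; [simpl; auto|]. apply pipe_fire_ex; auto.
Qed.

Lemma sys_in_ex N c l : fst (c (S N)) = false -> In 0 l ->
  exists l', astep (sys N c l) (vis act_in) (sys N (upd c (S N) (true, false)) l') /\ ustep l l' 0.
Proof.
  intros H Hi. destruct (users_step_ex l 0 ltac:(lia) Hi) as (l'&Ha&Hs).
  exists l'. split; auto. unfold sys, parT. apply as_sync; [unfold notOmega; discriminate| |].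
  - apply pipe_in_ex; auto.
  - exact Ha.
Qed.

Lemma sys_out_ex N c l : fst (c 0) = true -> In 1 l ->
  exists l', astep (sys N c l) (vis act_out) (sys N (upd c 0 (false, false)) l') /\ ustep l l' 1.
Proof.
  intros H Hi. destruct (users_step_ex l 1 ltac:(lia) Hi) as (l'&Ha&Hs).
  exists l'. split; auto. unfold sys, parT. apply as_sync; [unfold notOmega; discriminate| |].
  - apply pipe_out_ex; auto.
  - exact Ha.
Qed.

Definition itm (x : bool * bool) : nat := if fst x then 1 else 0.
Definition lz (x : bool * bool) : nat := if snd x then 0 else 1.

Fixpoint sumf (f : nat -> nat) (k : nat) : nat :=
  match k with 0 => 0 | S k' => sumf f k' + f k' end.

Fixpoint maxf (f : nat -> nat) (k : nat) : nat :=
  match k with 0 => 0 | S k' => Nat.max (maxf f k') (f k') end.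

Lemma sumf_ext f g k : (forall i, i < k -> f i = g i) -> sumf f k = sumf g k.
Proof. induction k; intro H; simpl; auto. rewrite IHk by (intros; apply H; lia). rewrite H by lia. auto. Qed.

Lemma sumf_upd f g k i0 : i0 < k -> (forall i, i < k -> i <> i0 -> f i = g i) ->
  sumf f k + g i0 = sumf g k + f i0.
Proof.
  induction k; intros Hi H; [lia|]. simpl.
  assert (i0 < k \/ i0 = k) as [Hlt | ->] by lia.
  - rewrite (H k) by lia. specialize (IHk Hlt ltac:(intros; apply H; lia)). lia.
  - rewrite (sumf_ext f g k) by (intros; apply H; lia). lia.
Qed.

Lemma sumf_ge f k i : i < k -> f i <= sumf f k.
Proof. induction k; intro H; simpl; [lia|]. assert (i < k \/ i = k) as [| ->] by lia; [specialize (IHk H0)|]; lia. Qed.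

Lemma sumf_zero f k : (forall i, i < k -> f i = 0) -> sumf f k = 0.
Proof. induction k; intro H; simpl; auto. rewrite IHk by (intros; apply H; lia). rewrite H by lia. auto. Qed.

Lemma sumf_pos f k : 1 <= sumf f k -> exists i, i < k /\ 1 <= f i.
Proof.
  induction k; simpl; intro H; [lia|].
  destruct (Nat.eq_dec (f k) 0) as [E|E].
  - destruct IHk as (i&?&?); [lia|]. exists i; split; auto.
  - exists k; split; lia.
Qed.

Lemma maxf_ge f k i : i < k -> f i <= maxf f k.
Proof. induction k; intro H; simpl; [lia|]. assert (i < k \/ i = k) as [| ->] by lia; [specialize (IHk H0)|]; lia. Qed.

Lemma maxf_le f k B : (forall i, i < k -> f i <= B) -> maxf f k <= B.
Proof. induction k; intro H; simpl; [lia|]. specialize (IHk ltac:(intros; apply H; lia)). specialize (H k ltac:(lia)). lia. Qed.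

Lemma maxf_attain f k : 0 < k -> exists i, i < k /\ maxf f k = f i.
Proof.
  induction k; intro H; [lia|]. simpl. destruct k.
  - exists 0. simpl. split; auto.
  - destruct IHk as (i&Hi&E); [lia|].
    destruct (Nat.le_ge_cases (maxf f (S k)) (f (S k))).
    + exists (S k). split; [lia|]. lia.
    + exists i. split; [lia|]. lia.
Qed.

Section Pot.
Variable N : nat.

Definition mm (c : cfg) (a j : nat) : nat := a + sumf (fun i => if j <=? i then itm (c i) else 0) (S (S N)).
Definition items (c : cfg) : nat := sumf (fun i => itm (c i)) (S (S N)).
Definition baseb (c : cfg) (j : nat) : bool :=
  (match j with 0 => false | S j' => negb (fst (c j')) && negb (snd (c j')) end) ||
  ((j <=? S N) && fst (c j) && negb (snd (c j))).
Definition base (c : cfg) (j : nat) : nat := if baseb c j then 1 else 0.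
Definition term (c : cfg) (a j : nat) : nat :=
  match mm c a j with 0 => 0 | S x => j + 2 * x + base c j end.
Definition Dp (c : cfg) (a : nat) : nat := maxf (term c a) (S (S (S N))).

Lemma term_cases c a j : (mm c a j = 0 /\ term c a j = 0) \/
  (1 <= mm c a j /\ term c a j + 2 = j + 2 * mm c a j + base c j).
Proof. unfold term. destruct (mm c a j); [left; auto|right; split; lia]. Qed.

Lemma base_le c j : base c j <= 1.
Proof. unfold base. destruct (baseb c j); lia. Qed.

Lemma mm_S c a j : j <= S N -> mm c a j = itm (c j) + mm c a (S j).
Proof.
  intro Hj. unfold mm.
  pose proof (sumf_upd (fun i => if j <=? i then itm (c i) else 0)
                       (fun i => if S j <=? i then itm (c i) else 0) (S (S N)) j ltac:(lia)) as H.
  cbv beta in H. rewrite Nat.leb_refl in H.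
  replace (S j <=? j) with false in H by (symmetry; apply Nat.leb_gt; lia).
  lapply H; [intro H'; lia|].
  intros i Hi Hne. destruct (Nat.leb_spec j i), (Nat.leb_spec (S j) i); auto; lia.
Qed.

Lemma mm_top c a : mm c a (S (S N)) = a.
Proof.
  unfold mm. rewrite sumf_zero; [lia|]. intros i Hi. destruct (Nat.leb_spec (S (S N)) i); lia.
Qed.

Lemma mm_0 c a : mm c a 0 = a + items c.
Proof. unfold mm, items. f_equal. Qed.

Lemma mm_upd c a i0 x j : i0 <= S N ->
  mm (upd c i0 x) a j + (if j <=? i0 then itm (c i0) else 0) = mm c a j + (if j <=? i0 then itm x else 0).
Proof.
  intro Hi. unfold mm.
  pose proof (sumf_upd (fun i => if j <=? i then itm (upd c i0 x i) else 0)
                       (fun i => if j <=? i then itm (c i) else 0) (S (S N)) i0 ltac:(lia)) as H.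
  cbv beta in H. rewrite upd_eq in H. lapply H; [intro H'; lia|].
  intros i _ Hne. rewrite upd_ne; auto.
Qed.

Lemma items_upd c i0 x : i0 <= S N -> items (upd c i0 x) + itm (c i0) = items c + itm x.
Proof.
  intro Hi. unfold items.
  pose proof (sumf_upd (fun i => itm (upd c i0 x i)) (fun i => itm (c i)) (S (S N)) i0 ltac:(lia)) as H.
  cbv beta in H. rewrite upd_eq in H. lapply H; [intro H'; lia|].
  intros i _ Hne. rewrite upd_ne; auto.
Qed.

Lemma base_upd_ne c i0 x j : j <> i0 -> j <> S i0 -> base (upd c i0 x) j = base c j.
Proof.
  intros H1 H2. unfold base, baseb. destruct j as [|j'].
  - rewrite upd_ne by auto. reflexivity.
  - rewrite !upd_ne by lia. reflexivity.
Qed.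

Lemma term_ext c c' a a' j : mm c' a' j = mm c a j -> base c' j = base c j -> term c' a' j = term c a j.
Proof. intros H1 H2. unfold term. rewrite H1, H2. reflexivity. Qed.

Lemma Dp_ge c a j : j <= S (S N) -> term c a j <= Dp c a.
Proof. intro H. unfold Dp. apply maxf_ge. lia. Qed.

Lemma itm_hole x : fst x = false -> itm x = 0.
Proof. unfold itm. intros ->. reflexivity. Qed.
Lemma itm_item x : fst x = true -> itm x = 1.
Proof. unfold itm. intros ->. reflexivity. Qed.

Lemma D_fire c a j0 : j0 <= N -> fst (c j0) = false -> fst (c (S j0)) = true ->
  Dp (fire c j0) a <= Dp c a /\
  (snd (c j0) = true -> snd (c (S j0)) = true -> Dp c a <= Dp (fire c j0) a).
Proof.
  intros Hj H0 H1.
  set (c1 := upd c j0 (true, false)).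
  assert (Em : forall j, mm (fire c j0) a j + (if j <=? S j0 then 1 else 0) =
                         mm c a j + (if j <=? j0 then 1 else 0)).
  { intro j. unfold fire. fold c1.
    pose proof (mm_upd c1 a (S j0) (false, false) j ltac:(lia)) as E2.
    pose proof (mm_upd c a j0 (true, false) j ltac:(lia)) as E1. fold c1 in E1.
    unfold c1 in E2 at 2. rewrite upd_ne in E2 by lia.
    rewrite (itm_item (c (S j0))) in E2 by auto. rewrite (itm_hole (c j0)) in E1 by auto.
    unfold itm in E1, E2. simpl in E1, E2.
    destruct (Nat.leb_spec j (S j0)), (Nat.leb_spec j j0); lia. }
  assert (Eb : forall j, j <> j0 -> j <> S j0 -> j <> S (S j0) -> base (fire c j0) j = base c j).
  { intros j J1 J2 J3. unfold fire. rewrite base_upd_ne by lia. rewrite base_upd_ne by lia. reflexivity. }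
  assert (B0 : base (fire c j0) j0 = 1).
  { unfold base, baseb, fire. rewrite (upd_ne _ (S j0)) by lia. rewrite upd_eq. simpl.
    destruct (Nat.leb_spec j0 (S N)); [|lia]. rewrite orb_true_r. reflexivity. }
  assert (B1 : base (fire c j0) (S j0) = 0).
  { unfold base, baseb, fire. rewrite (upd_ne _ (S j0) _ j0) by lia. rewrite !upd_eq. simpl.
    rewrite andb_false_r. reflexivity. }
  assert (B2 : base (fire c j0) (S (S j0)) = 1).
  { unfold base, baseb, fire. rewrite upd_eq. reflexivity. }
  assert (Ms : mm c a j0 = mm c a (S j0)) by (rewrite mm_S by lia; rewrite itm_hole by auto; lia).
  assert (Ms1 : mm c a (S j0) = 1 + mm c a (S (S j0))) by (rewrite mm_S by lia; rewrite itm_item by auto; lia).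
  pose proof (Em j0) as Em0. pose proof (Em (S j0)) as Em1. pose proof (Em (S (S j0))) as Em2.

  rewrite Nat.leb_refl in Em0. rewrite (proj2 (Nat.leb_le j0 (S j0))) in Em0 by lia.
  rewrite Nat.leb_refl in Em1. rewrite (proj2 (Nat.leb_gt (S j0) j0)) in Em1 by lia.
  rewrite (proj2 (Nat.leb_gt (S (S j0)) (S j0))) in Em2 by lia.
  rewrite (proj2 (Nat.leb_gt (S (S j0)) j0)) in Em2 by lia.
  pose proof (term_cases c a j0) as T0. pose proof (term_cases c a (S j0)) as T1.
  pose proof (term_cases c a (S (S j0))) as T2.
  pose proof (term_cases (fire c j0) a j0) as T0'. pose proof (term_cases (fire c j0) a (S j0)) as T1'.
  pose proof (term_cases (fire c j0) a (S (S j0))) as T2'.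
  pose proof (base_le c j0). pose proof (base_le c (S j0)). pose proof (base_le c (S (S j0))).
  pose proof (Dp_ge c a (S j0) ltac:(lia)).
  assert (Hoth : forall j, j <> j0 -> j <> S j0 -> j <> S (S j0) -> term (fire c j0) a j = term c a j).
  { intros j J1 J2 J3. apply term_ext; [|apply Eb; auto].
    pose proof (Em j). destruct (Nat.leb_spec j (S j0)), (Nat.leb_spec j j0); lia. }
  split.
  - unfold Dp at 1. apply maxf_le. intros j Hjl.
    destruct (Nat.eq_dec j j0) as [-> | J1]; [lia|].
    destruct (Nat.eq_dec j (S j0)) as [-> | J2]; [lia|].
    destruct (Nat.eq_dec j (S (S j0))) as [-> | J3]; [lia|].
    rewrite Hoth by auto. apply Dp_ge; lia.
  - intros U0 U1.
    assert (B1o : base c (S j0) = 0).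
    { unfold base, baseb. rewrite H0, U0, H1, U1. simpl. rewrite andb_false_r. reflexivity. }
    pose proof (Dp_ge (fire c j0) a j0 ltac:(lia)).
    pose proof (Dp_ge (fire c j0) a (S (S j0)) ltac:(lia)).
    unfold Dp at 1. apply maxf_le. intros j Hjl.
    destruct (Nat.eq_dec j j0) as [-> | J1]; [lia|].
    destruct (Nat.eq_dec j (S j0)) as [-> | J2]; [lia|].
    destruct (Nat.eq_dec j (S (S j0))) as [-> | J3]; [lia|].
    rewrite <- Hoth by auto. apply Dp_ge; lia.
Qed.


Lemma D_in c a : fst (c (S N)) = false ->
  Dp (upd c (S N) (true, false)) a <= Dp c (S a) /\
  (snd (c (S N)) = true -> Dp c (S a) <= Dp (upd c (S N) (true, false)) a).
Proof.
  intros H0. set (c' := upd c (S N) (true, false)).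
  assert (Em : forall j, j <= S N -> mm c' a j = mm c (S a) j).
  { intros j Hj. pose proof (mm_upd c a (S N) (true, false) j ltac:(lia)) as E.
    rewrite (itm_hole (c (S N))) in E by auto. unfold itm in E; simpl in E.
    rewrite (proj2 (Nat.leb_le j (S N))) in E by lia. fold c' in E. unfold mm in *. lia. }
  assert (Et : mm c' a (S (S N)) = a) by apply mm_top.
  assert (Et' : mm c (S a) (S (S N)) = S a) by apply mm_top.
  assert (Ms : mm c (S a) (S N) = S a) by (rewrite mm_S by lia; rewrite itm_hole by auto; lia).
  assert (B0 : base c' (S N) = 1).
  { unfold base, baseb, c'. rewrite upd_eq. rewrite Nat.leb_refl. simpl. rewrite orb_true_r. reflexivity. }
  assert (B1 : base c' (S (S N)) = 0).
  { unfold base, baseb. replace (S (S N) <=? S N) with false by (symmetry; apply Nat.leb_gt; lia).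
    unfold c'. rewrite upd_eq. reflexivity. }
  assert (Hoth : forall j, j <> S N -> j <> S (S N) -> j <= S (S N) -> term c' a j = term c (S a) j).
  { intros j J1 J2 J3. apply term_ext; [apply Em; lia|]. unfold c'. apply base_upd_ne; auto. }
  pose proof (term_cases c (S a) (S N)) as T0. pose proof (term_cases c (S a) (S (S N))) as T1.
  pose proof (term_cases c' a (S N)) as T0'. pose proof (term_cases c' a (S (S N))) as T1'.
  pose proof (Em (S N) ltac:(lia)) as EmN.
  pose proof (base_le c (S N)). pose proof (base_le c (S (S N))).
  pose proof (Dp_ge c (S a) (S (S N)) ltac:(lia)).
  split.
  - unfold Dp at 1. apply maxf_le. intros j Hjl.
    destruct (Nat.eq_dec j (S N)) as [-> | J1]; [lia|].
    destruct (Nat.eq_dec j (S (S N))) as [-> | J2]; [lia|].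
    rewrite Hoth by lia. apply Dp_ge; lia.
  - intros U0.
    assert (B1o : base c (S (S N)) = 0).
    { unfold base, baseb. replace (S (S N) <=? S N) with false by (symmetry; apply Nat.leb_gt; lia).
      rewrite H0, U0. reflexivity. }
    pose proof (Dp_ge c' a (S N) ltac:(lia)).
    unfold Dp at 1. apply maxf_le. intros j Hjl.
    destruct (Nat.eq_dec j (S N)) as [-> | J1]; [lia|].
    destruct (Nat.eq_dec j (S (S N))) as [-> | J2]; [lia|].
    rewrite <- Hoth by lia. apply Dp_ge; lia.
Qed.

Lemma D_out c a : fst (c 0) = true ->
  Dp (upd c 0 (false, false)) a <= Dp c a /\
  (snd (c 0) = true -> Dp c a <= Dp (upd c 0 (false, false)) a).
Proof.
  intros H0. set (c' := upd c 0 (false, false)).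
  assert (Em : forall j, 1 <= j -> mm c' a j = mm c a j).
  { intros j Hj. pose proof (mm_upd c a 0 (false, false) j ltac:(lia)) as E.
    replace (j <=? 0) with false in E by (symmetry; apply Nat.leb_gt; lia). fold c' in E. lia. }
  assert (E0 : mm c' a 0 + 1 = mm c a 0).
  { pose proof (mm_upd c a 0 (false, false) 0 ltac:(lia)) as E.
    rewrite itm_item in E by auto. fold c' in E. rewrite Nat.leb_refl in E. cbv iota in E. change (itm (false, false)) with 0 in E. lia. }
  assert (Ms : mm c a 0 = 1 + mm c a 1) by (rewrite mm_S by lia; rewrite itm_item by auto; lia).
  assert (B0 : base c' 0 = 0).
  { unfold base, baseb, c'. rewrite upd_eq. reflexivity. }
  assert (B1 : base c' 1 = 1).
  { unfold base, baseb, c'. rewrite upd_eq. reflexivity. }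
  assert (Hoth : forall j, 2 <= j -> term c' a j = term c a j).
  { intros j J1. apply term_ext; [apply Em; lia|]. unfold c'. apply base_upd_ne; lia. }
  pose proof (term_cases c a 0) as T0. pose proof (term_cases c a 1) as T1.
  pose proof (term_cases c' a 0) as T0'. pose proof (term_cases c' a 1) as T1'.
  pose proof (Em 1 ltac:(lia)) as Em1.
  pose proof (base_le c 0). pose proof (base_le c 1).
  pose proof (Dp_ge c a 0 ltac:(lia)).
  split.
  - unfold Dp at 1. apply maxf_le. intros j Hjl.
    destruct (Nat.eq_dec j 0) as [-> | J1]; [lia|].
    destruct (Nat.eq_dec j 1) as [-> | J2]; [lia|].
    rewrite Hoth by lia. apply Dp_ge; lia.
  - intros U0.
    assert (B0o : base c 0 = 0).
    { unfold base, baseb. rewrite H0, U0. reflexivity. }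
    pose proof (Dp_ge c' a 1 ltac:(lia)).
    unfold Dp at 1. apply maxf_le. intros j Hjl.
    destruct (Nat.eq_dec j 0) as [-> | J1]; [lia|].
    destruct (Nat.eq_dec j 1) as [-> | J2]; [lia|].
    rewrite <- Hoth by lia. apply Dp_ge; lia.
Qed.

Lemma mm_urg c a j : mm (urg c) a j = mm c a j.
Proof. unfold mm. f_equal. Qed.

Lemma base_urg c j : base (urg c) j = 0.
Proof. unfold base, baseb, urg. destruct j; simpl; rewrite !andb_false_r; reflexivity. Qed.

Lemma D_time_lb c a : Dp c a <= S (Dp (urg c) a).
Proof.
  unfold Dp at 1. apply maxf_le. intros j Hj.
  pose proof (Dp_ge (urg c) a j ltac:(lia)).
  pose proof (term_cases c a j). pose proof (term_cases (urg c) a j).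
  rewrite mm_urg, base_urg in *. pose proof (base_le c j). lia.
Qed.

Lemma D_time c a : (forall j, j <= N -> ~ enabled_u c j) -> ~ (c (S N) = (false, true) /\ 1 <= a) ->
  c 0 <> (true, true) -> 1 <= a + items c -> S (Dp (urg c) a) <= Dp c a.
Proof.
  intros HE Hin Hout Hpos.
  set (h := fun j => match mm c a j with 0 => 0 | S x => S (j + 2 * x) end).
  destruct (maxf_attain h (S (S (S N))) ltac:(lia)) as (js&Hjs&Ejs).
  assert (Hh : forall j, j <= S (S N) -> h j <= h js).
  { intros j Hj. rewrite <- Ejs. apply maxf_ge. lia. }
  assert (Hm0 : 1 <= mm c a 0) by (rewrite mm_0; lia).
  assert (Hh0 := Hh 0 ltac:(lia)). unfold h in Hh0 at 1.
  destruct (mm c a 0) eqn:E0; [lia|].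
  assert (Hmjs : 1 <= mm c a js).
  { unfold h in Hh0. destruct (mm c a js); lia. }
  assert (HR : js <= S N -> fst (c js) = true).
  { intros Hl. destruct (fst (c js)) eqn:F; auto. exfalso.
    pose proof (mm_S c a js Hl) as M. rewrite itm_hole in M by auto.
    specialize (Hh (S js) ltac:(lia)). unfold h in Hh.
    replace (mm c a (S js)) with (mm c a js) in Hh by lia.
    destruct (mm c a js); lia. }
  assert (HL : forall j', js = S j' -> fst (c j') = false).
  { intros j' ->. destruct (fst (c j')) eqn:F; auto. exfalso.
    pose proof (mm_S c a j' ltac:(lia)) as M. rewrite itm_item in M by auto.
    specialize (Hh j' ltac:(lia)). unfold h in Hh. rewrite M in Hh. simpl in Hh.
    destruct (mm c a (S j')); lia. }
  assert (Hb : base c js = 1).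
  { unfold base, baseb. destruct js as [|j'].
    - simpl. specialize (HR ltac:(lia)). rewrite HR. simpl.
      destruct (snd (c 0)) eqn:U; [|reflexivity]. exfalso. apply Hout.
      destruct (c 0); simpl in *; subst; reflexivity.
    - specialize (HL j' eq_refl). rewrite HL. simpl.
      destruct (snd (c j')) eqn:U; [|reflexivity]. simpl.
      destruct (Nat.le_gt_cases j' N) as [Hle|Hgt].
      + specialize (HR ltac:(lia)). rewrite HR.
        rewrite ?(proj2 (Nat.leb_le j' N) Hle), ?(proj2 (Nat.leb_le (S j') (S N)) ltac:(lia)).
        destruct (snd (c (S j'))) eqn:U'; [|reflexivity]. exfalso. apply (HE j' ltac:(lia)).
        unfold enabled_u. destruct (c j'), (c (S j')); simpl in *; subst; auto.
      + exfalso. assert (j' = S N) by lia. subst j'. apply Hin. split.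
        * destruct (c (S N)); simpl in *; subst; auto.
        * rewrite mm_top in Hmjs. lia. }
  assert (Ht : term c a js = h js + base c js - 1).
  { unfold term, h. destruct (mm c a js); lia. }
  pose proof (Dp_ge c a js ltac:(lia)).
  assert (Dp (urg c) a <= h js - 1).
  { unfold Dp. apply maxf_le. intros j Hj. specialize (Hh j ltac:(lia)).
    unfold term. rewrite mm_urg, base_urg. unfold h in Hh |- *.
    destruct (mm c a j); lia. }
  assert (1 <= h js) by (unfold h in *; destruct (mm c a js); lia).
  lia.
Qed.

Lemma D_init n : 1 <= n -> Dp (fun _ => (false, false)) n = 2 * n + N + 1.
Proof.
  intro Hn. set (c0 := fun _ : nat => (false, false)).
  assert (Em : forall j, mm c0 n j = n).
  { intro j. unfold mm. rewrite sumf_zero; [lia|]. intros i _. unfold itm; simpl. destruct (j <=? i); auto. }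
  assert (Eb : forall j, base c0 j = if j =? 0 then 0 else 1).
  { intro j. unfold base, baseb; destruct j; simpl; auto. }
  apply Nat.le_antisymm.
  - unfold Dp. apply maxf_le. intros j Hj. unfold term. rewrite Em, Eb.
    destruct n; [lia|]. destruct (j =? 0); lia.
  - pose proof (Dp_ge c0 n (S (S N)) ltac:(lia)) as H. unfold term in H. rewrite Em, Eb in H.
    destruct n; [lia|]. simpl in H. lia.
Qed.

Definition psi (c : cfg) : nat :=
  3 * sumf (fun i => i * itm (c i)) (S (S N)) + sumf (fun i => lz (c i)) (S (S N)).

Lemma psi_ext c c' : (forall i, i <= S N -> c i = c' i) -> psi c = psi c'.
Proof.
  intro H. unfold psi. rewrite (sumf_ext (fun i => i * itm (c i)) (fun i => i * itm (c' i))).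
  rewrite (sumf_ext (fun i => lz (c i)) (fun i => lz (c' i))). reflexivity.
  all: intros i Hi; rewrite H by lia; reflexivity.
Qed.

Lemma psi_fire c j0 : j0 <= N -> fst (c j0) = false -> fst (c (S j0)) = true ->
  psi (fire c j0) < psi c.
Proof.
  intros Hj H0 H1. unfold psi, fire. set (c1 := upd c j0 (true, false)).
  pose proof (sumf_upd (fun i => i * itm (upd c1 (S j0) (false, false) i)) (fun i => i * itm (c1 i))
     (S (S N)) (S j0) ltac:(lia) ltac:(intros i _ Hne; cbv beta; rewrite upd_ne; auto)) as P2.
  pose proof (sumf_upd (fun i => i * itm (c1 i)) (fun i => i * itm (c i))
     (S (S N)) j0 ltac:(lia) ltac:(intros i _ Hne; cbv beta; unfold c1; rewrite upd_ne; auto)) as P1.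
  pose proof (sumf_upd (fun i => lz (upd c1 (S j0) (false, false) i)) (fun i => lz (c1 i))
     (S (S N)) (S j0) ltac:(lia) ltac:(intros i _ Hne; cbv beta; rewrite upd_ne; auto)) as L2.
  pose proof (sumf_upd (fun i => lz (c1 i)) (fun i => lz (c i))
     (S (S N)) j0 ltac:(lia) ltac:(intros i _ Hne; cbv beta; unfold c1; rewrite upd_ne; auto)) as L1.
  cbv beta in P1, P2, L1, L2. rewrite upd_eq in P2, L2.
  assert (E1 : c1 (S j0) = c (S j0)) by (unfold c1; apply upd_ne; lia).
  assert (E0 : c1 j0 = (true, false)) by (unfold c1; apply upd_eq).
  rewrite E1 in P2, L2. rewrite E0 in P1, L1.
  rewrite itm_item in P2 by auto. rewrite itm_hole in P1 by auto.
  unfold itm, lz in *; cbn [fst snd] in *.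
  destruct (snd (c j0)), (snd (c (S j0))); lia.
Qed.

Lemma psi_urg c : psi (urg c) + sumf (fun i => lz (c i)) (S (S N)) = psi c.
Proof.
  unfold psi. rewrite (sumf_ext (fun i => lz (urg c i)) (fun _ => 0)) by (intros; reflexivity).
  rewrite (sumf_zero (fun _ => 0)) by auto.
  rewrite (sumf_ext (fun i => i * itm (urg c i)) (fun i => i * itm (c i))) by (intros; reflexivity).
  lia.
Qed.

Lemma items_urg c : items (urg c) = items c.
Proof. unfold items. apply sumf_ext. intros; reflexivity. Qed.

Lemma all_urgent_front c : (forall i, i <= S N -> snd (c i) = true) ->
  (forall j, j <= N -> ~ enabled_u c j) -> 1 <= items c -> fst (c 0) = true.
Proof.
  intros HU HE Hi. destruct (sumf_pos _ _ Hi) as (i&Hil&Hv).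
  assert (Fi : fst (c i) = true) by (unfold itm in Hv; destruct (fst (c i)); auto; lia).
  clear Hv Hi. induction i; auto.
  apply IHi; [lia|]. destruct (fst (c i)) eqn:F; auto. exfalso. apply (HE i ltac:(lia)).
  unfold enabled_u. pose proof (HU i ltac:(lia)). pose proof (HU (S i) ltac:(lia)).
  destruct (c i), (c (S i)); simpl in *; subst; auto.
Qed.

End Pot.

Lemma cnt_In k l : In k l <-> 1 <= cnt k l.
Proof.
  induction l as [|x l IH]; simpl; split; intro H; try tauto; try lia.
  - destruct H as [->|H]; [rewrite Nat.eqb_refl; lia|]. apply IH in H. lia.
  - destruct (Nat.eqb_spec x k); [left; auto|]. right. apply IH. lia.
Qed.

Lemma all_ge2 l : bnd l -> ~ In 0 l -> ~ In 1 l -> forall x, In x l -> 2 <= x.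
Proof.
  intros Hb H0 H1 x Hx. specialize (Hb x Hx). destruct x as [|[|x]]; try lia; contradiction.
Qed.

Definition good (N : nat) (c : cfg) (l : list nat) : Prop :=
  items N c = cnt 1 l /\ bnd l /\ l <> [].

Lemma ustep_good l l' k : ustep l l' k -> bnd l -> l <> [] -> bnd l' /\ l' <> [].
Proof.
  intros (H1&H2&H3&H4&H5) Hb Hne. split.
  - intros x Hx. destruct (H5 x Hx); auto.
  - intro E. subst. destruct l; simpl in H4; [congruence|discriminate].
Qed.

Lemma items_fire N c j0 : j0 <= N -> fst (c j0) = false -> fst (c (S j0)) = true ->
  items N (fire c j0) = items N c.
Proof.
  intros Hj H0 H1. unfold fire.
  pose proof (items_upd N (upd c j0 (true, false)) (S j0) (false, false) ltac:(lia)) as E2.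
  pose proof (items_upd N c j0 (true, false) ltac:(lia)) as E1.
  rewrite upd_ne in E2 by lia. rewrite itm_item in E2 by auto. rewrite itm_hole in E1 by auto.
  unfold itm in E1, E2; simpl in E1, E2. lia.
Qed.

Lemma good_fire N c l j0 : j0 <= N -> fst (c j0) = false -> fst (c (S j0)) = true ->
  good N c l -> good N (fire c j0) l.
Proof. intros ? ? ? (G1&G2&G3). repeat split; auto. rewrite items_fire; auto. Qed.

Lemma good_in N c l l' : fst (c (S N)) = false -> ustep l l' 0 -> good N c l ->
  good N (upd c (S N) (true, false)) l'.
Proof.
  intros H0 Hs (G1&G2&G3). destruct (ustep_good l l' 0 Hs G2 G3).
  repeat split; auto. pose proof (items_upd N c (S N) (true, false) ltac:(lia)) as E.
  rewrite itm_hole in E by auto. unfold itm in E; simpl in E. destruct Hs as (_&S2&_). lia.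
Qed.

Lemma good_out N c l l' : fst (c 0) = true -> ustep l l' 1 -> good N c l ->
  good N (upd c 0 (false, false)) l'.
Proof.
  intros H0 Hs (G1&G2&G3). destruct (ustep_good l l' 1 Hs G2 G3).
  repeat split; auto. pose proof (items_upd N c 0 (false, false) ltac:(lia)) as E.
  rewrite itm_item in E by auto. unfold itm in E; simpl in E. destruct Hs as (S1&_). lia.
Qed.

Lemma good_urg N c l : good N c l -> good N (urg c) l.
Proof. intros (G1&G2&G3). repeat split; auto; try (rewrite items_urg; auto). Qed.

Lemma ustep1_cnt0 l l' : ustep l l' 1 -> cnt 0 l' = cnt 0 l.
Proof. intros (_&_&H3&_). apply H3; lia. Qed.

Lemma time_conds N c l : good N c l ->
  (forall j, j <= N -> ~ enabled_u c j) ->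
  ~ (c (S N) = (false, true) /\ In 0 l) -> ~ (c 0 = (true, true) /\ In 1 l) ->
  ~ (forall x, In x l -> 2 <= x) ->
  S (Dp N (urg c) (cnt 0 l)) <= Dp N c (cnt 0 l).
Proof.
  intros (G1&G2&G3) HE Hin Hout Hom. apply D_time; auto.
  - intros [E Ha]. apply Hin. split; auto. apply cnt_In. auto.
  - intro E. apply Hout. split; auto. apply cnt_In. rewrite <- G1.
    pose proof (sumf_ge (fun i => itm (c i)) (S (S N)) 0 ltac:(lia)) as Hs.
    unfold items. cbv beta in Hs. rewrite E in Hs. change (itm (true, true)) with 1 in Hs. exact Hs.
  - destruct (classic (In 0 l)) as [H0|H0]; [apply cnt_In in H0; lia|].
    destruct (classic (In 1 l)) as [H1|H1]; [apply cnt_In in H1; lia|].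
    exfalso. apply Hom. apply all_ge2; auto.
Qed.

Lemma UB N : forall v P, DL P v -> forall c l, P = sys N c l -> good N c l ->
  ~ In (DAct omega) v -> zeta v <= Dp N c (cnt 0 l).
Proof.
  induction 1; intros c l EP Hg Hom; subst.
  - simpl. lia.
  - apply sys_astep in H; [|discriminate].
    destruct H as [(j&Hj&H1&H2&_&->)|[(l'&_&E&_)|(l'&_&E&_)]]; try discriminate.
    etransitivity; [apply (IHDL (fire c j) l); auto|].
    + apply good_fire; auto.
    + apply D_fire; auto.
  - assert (a <> omega) by (intro E; apply Hom; left; congruence).
    apply sys_astep in H; [|congruence].
    destruct H as [(j&Hj&K1&K2&E&_)|[(l'&K1&E&->&Hs)|(l'&K1&E&->&Hs)]]; try discriminate.
    + injection E as ->. simpl.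
      etransitivity; [apply (IHDL _ l' eq_refl)|].
      * apply (good_in N c l l'); auto.
      * intro Hi; apply Hom; right; auto.
      * destruct Hs as (S1&_). rewrite S1. apply D_in; auto.
    + injection E as ->. simpl.
      etransitivity; [apply (IHDL _ l' eq_refl)|].
      * apply (good_out N c l l'); auto.
      * intro Hi; apply Hom; right; auto.
      * rewrite (ustep1_cnt0 l l' Hs). apply D_out; auto.
  - apply sys_fstep in H as (->&HE&Hin&Hout&Hom').
    simpl. specialize (IHDL (urg c) l eq_refl (good_urg N c l Hg) ltac:(intro Hi; apply Hom; right; auto)).
    pose proof (time_conds N c l Hg HE Hin Hout (Hom' (proj2 (proj2 Hg)))). lia.
Qed.

Definition posw (N : nat) (c : cfg) : nat := sumf (fun i => S i * itm (c i)) (S (S N)).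

Lemma posw_upd N c i0 x : i0 <= S N -> posw N (upd c i0 x) + S i0 * itm (c i0) = posw N c + S i0 * itm x.
Proof.
  intro Hi. unfold posw.
  pose proof (sumf_upd (fun i => S i * itm (upd c i0 x i)) (fun i => S i * itm (c i)) (S (S N)) i0
    ltac:(lia) ltac:(intros i _ Hne; cbv beta; rewrite upd_ne; auto)) as H.
  cbv beta in H. rewrite upd_eq in H. lia.
Qed.

Definition mu (N : nat) (c : cfg) (a : nat) : nat := (N + 3) * a + posw N c.

Lemma Dp_zero N c a : a + items N c = 0 -> Dp N c a = 0.
Proof.
  intro H. unfold Dp. apply Nat.le_0_r. apply maxf_le. intros j Hj. unfold term.
  assert (mm N c a j = 0).
  { unfold mm. assert (a = 0) by lia. subst.
    assert (sumf (fun i => if j <=? i then itm (c i) else 0) (S (S N)) <= items N c).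
    { unfold items. clear. induction (S (S N)); simpl; auto. destruct (j <=? n); lia. }
    lia. }
  rewrite H0. lia.
Qed.

Lemma LB N : forall K c l, Dp N c (cnt 0 l) + mu N c (cnt 0 l) <= K -> good N c l ->
  exists v, DL (sys N c l) v /\ ~ In (DAct omega) v /\ Dp N c (cnt 0 l) <= zeta v.
Proof.
  induction K; intros c l HK Hg.
  - exists []. repeat split; [apply dl_nil|simpl; tauto|simpl; lia].
  - destruct (Nat.eq_dec (Dp N c (cnt 0 l)) 0) as [Z|NZ].
    { exists []. repeat split; [apply dl_nil|simpl; tauto|simpl; lia]. }
    destruct (classic (exists j, j <= N /\ enabled_u c j)) as [(j&Hj&[E1 E2])|NE].
    { assert (F1 : fst (c j) = false) by (rewrite E1; auto).
      assert (F2 : fst (c (S j)) = true) by (rewrite E2; auto).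
      destruct (D_fire N c (cnt 0 l) j Hj F1 F2) as [D1 D2].
      specialize (D2 ltac:(rewrite E1; auto) ltac:(rewrite E2; auto)).
      pose proof (posw_upd N (upd c j (true, false)) (S j) (false, false) ltac:(lia)) as P2.
      pose proof (posw_upd N c j (true, false) ltac:(lia)) as P1.
      rewrite upd_ne in P2 by lia. rewrite itm_item in P2 by auto. rewrite itm_hole in P1 by auto.
      unfold itm in P1, P2; simpl in P1, P2. fold (fire c j) in P2.
      destruct (IHK (fire c j) l) as (v&Hv&Ho&Hz).
      - unfold mu in *. lia.
      - apply good_fire; auto.
      - exists v. repeat split; auto; [|lia]. eapply dl_tau; [apply sys_fire_ex; eauto|]. exact Hv. }
    destruct (classic (c (S N) = (false, true) /\ In 0 l)) as [[E Hi]|NI].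
    { assert (F : fst (c (S N)) = false) by (rewrite E; auto).
      destruct (sys_in_ex N c l F Hi) as (l'&Ha&Hs).
      pose proof Hs as (S1&_).
      destruct (D_in N c (cnt 0 l') F) as [D1 D2]. specialize (D2 ltac:(rewrite E; auto)).
      rewrite <- S1 in D1, D2.
      pose proof (posw_upd N c (S N) (true, false) ltac:(lia)) as P1.
      rewrite itm_hole in P1 by auto. unfold itm in P1; simpl in P1.
      destruct (IHK (upd c (S N) (true, false)) l') as (v&Hv&Ho&Hz).
      - unfold mu in *. rewrite S1 in *. lia.
      - apply (good_in N c l l'); auto.
      - exists (DAct act_in :: v). repeat split; [eapply dl_vis; eauto| |simpl; lia].
        intros [E'|E']; [discriminate|auto]. }
    destruct (classic (c 0 = (true, true) /\ In 1 l)) as [[E Hi]|NO].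
    { assert (F : fst (c 0) = true) by (rewrite E; auto).
      destruct (sys_out_ex N c l F Hi) as (l'&Ha&Hs).
      pose proof (ustep1_cnt0 l l' Hs) as S0.
      destruct (D_out N c (cnt 0 l) F) as [D1 D2]. specialize (D2 ltac:(rewrite E; auto)).
      pose proof (posw_upd N c 0 (false, false) ltac:(lia)) as P1.
      rewrite itm_item in P1 by auto. unfold itm in P1; simpl in P1.
      destruct (IHK (upd c 0 (false, false)) l') as (v&Hv&Ho&Hz).
      - unfold mu in *. rewrite S0. lia.
      - apply (good_out N c l l'); auto.
      - exists (DAct act_out :: v). repeat split; [eapply dl_vis; eauto| |simpl; rewrite S0 in Hz; lia].
        intros [E'|E']; [discriminate|auto]. }
    assert (HE : forall j, j <= N -> ~ enabled_u c j) by (intros j Hj He; apply NE; eauto).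
    destruct Hg as (G1&G2&G3).
    assert (Hom : ~ (forall x, In x l -> 2 <= x)).
    { intro Hall. apply NZ. apply Dp_zero.
      assert (~ In 0 l) by (intro Hi; specialize (Hall 0 Hi); lia).
      assert (~ In 1 l) by (intro Hi; specialize (Hall 1 Hi); lia).
      rewrite cnt_In in *. lia. }
    pose proof (sys_fstep_ex N c l G3 HE NI NO Hom) as Hf.
    pose proof (time_conds N c l (conj G1 (conj G2 G3)) HE NI NO Hom) as DT.
    pose proof (D_time_lb N c (cnt 0 l)).
    destruct (IHK (urg c) l) as (v&Hv&Ho&Hz).
    + unfold mu, posw in *. rewrite (sumf_ext (fun i => S i * itm (urg c i)) (fun i => S i * itm (c i)))
        by (intros; reflexivity). lia.
    + apply good_urg. repeat split; auto.
    + exists (DOne :: v). repeat split; [eapply dl_time; eauto| |simpl; lia].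
      intros [E'|E']; [discriminate|auto].
Qed.

Definition cinit : cfg := fun _ => (false, false).

Lemma init_eq N n : 1 <= n -> parT (PIPE N) (U n) = sys N cinit (repeat 0 n).
Proof. intro H. unfold sys. rewrite PIPE_eq, U_eq by auto. reflexivity. Qed.

Lemma cnt_repeat k n : cnt k (repeat 0 n) = if k =? 0 then n else 0.
Proof. induction n; simpl; [destruct k; reflexivity|]. rewrite IHn. destruct k; simpl; lia. Qed.

Lemma good_init N n : 1 <= n -> good N cinit (repeat 0 n).
Proof.
  intro H. repeat split.
  - rewrite cnt_repeat. simpl. unfold items. apply sumf_zero. intros; reflexivity.
  - intros x Hx. apply repeat_spec in Hx. lia.
  - destruct n; [lia|discriminate].
Qed.

Lemma rp_main N n : 1 <= n -> rp (PIPE N) n (fin (2 * n + (N + 1))).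
Proof.
  intro Hn. unfold rp, is_sup, rp_set.
  assert (ED : Dp N cinit (cnt 0 (repeat 0 n)) = 2 * n + (N + 1)).
  { rewrite cnt_repeat. simpl. unfold cinit. rewrite D_init by auto. lia. }
  split.
  - intros k (v&Hv&Ho&<-). simpl. rewrite init_eq in Hv by auto.
    replace (n + (n + 0) + (N + 1)) with (Dp N cinit (cnt 0 (repeat 0 n))) by (rewrite ED; lia). eapply UB; eauto. apply good_init; auto.
  - intros r' Hr.
    destruct (LB N _ cinit (repeat 0 n) (le_n _) (good_init N n Hn)) as (v&Hv&Ho&Hz).
    assert (Hv' : DL (parT (PIPE N) (U n)) v) by (rewrite init_eq by auto; exact Hv).
    specialize (Hr (zeta v) (ex_intro _ v (conj Hv' (conj Ho eq_refl)))).
    destruct r'; simpl in *; auto. lia.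
Qed.

Lemma asym N : asymptotic_performance (PIPE N) (2 # 1)%Q.
Proof.
  unfold asymptotic_performance.
  exists (inject_Z (Z.of_nat (N + 1))), (inject_Z (Z.of_nat (N + 1))), 1%nat.
  split.
  - unfold Qlt. simpl. lia.
  - intros n Hn _. exists (2 * n + (N + 1)). split; [apply rp_main; auto|].
    assert (E : (inject_Z (Z.of_nat (2 * n + (N + 1))) - (2 # 1) * inject_Z (Z.of_nat n) ==
                 inject_Z (Z.of_nat (N + 1)))%Q).
    { unfold Qeq, Qminus, Qplus, Qmult, Qopp, inject_Z. cbn [Qnum Qden]. lia. }
    rewrite E. rewrite Qabs_pos.
    + split; apply Qle_refl.
    + unfold Qle. simpl. lia.
Qed.

Lemma reach_inv N S T : reach_nw S T -> forall c l, S = sys N c l -> good N c l ->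
  exists c' l', T = sys N c' l' /\ good N c' l'.
Proof.
  induction 1; intros c l ES Hg; subst.
  - eauto.
  - apply sys_astep in H; auto.
    destruct H as [(j&Hj&K1&K2&_&->)|[(l'&K1&_&->&Hs)|(l'&K1&_&->&Hs)]].
    + eapply IHreach_nw; [reflexivity|]. apply good_fire; auto.
    + eapply IHreach_nw; [reflexivity|]. apply (good_in N c l l'); auto.
    + eapply IHreach_nw; [reflexivity|]. apply (good_out N c l l'); auto.
  - apply sys_fstep in H as (->&_).
    eapply IHreach_nw; [reflexivity|]. apply good_urg; auto.
Qed.

Lemma joint_inv N Q0 R : joint_reach (PIPE N) Q0 R ->
  exists c l, Q0 = pipeT N c /\ R = usersT l /\ good N c l.
Proof.
  intros (n&Hn&Hr). rewrite init_eq in Hr by auto.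
  destruct (reach_inv N _ _ Hr cinit (repeat 0 n) eq_refl (good_init N n Hn)) as (c&l&E&Hg).
  unfold sys, parT in E. injection E as -> ->. eauto.
Qed.

Lemma cellT_inj N i x y : cellT N i x = cellT N i y -> x = y.
Proof.
  unfold cellT. intro E.
  pose proof (f_equal (fun P => match P with Rel _ Q => Q | _ => Nil end) E) as E1.
  cbv beta iota in E1. clear E. rename E1 into E. unfold cs, C in E.
  destruct x as [[] []], y as [[] []]; simpl in E; try discriminate; reflexivity.
Qed.

Lemma chainT_inj N k c c' : chainT N k c = chainT N k c' -> forall i, i <= k -> c i = c' i.
Proof.
  induction k; simpl; intros E i Hi.
  - assert (i = 0) by lia; subst. apply cellT_inj in E; auto.
  - pose proof (f_equal (fun P => match P with Par _ Q _ => Q | _ => Nil end) E) as E1.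
    pose proof (f_equal (fun P => match P with Par _ _ Q => Q | _ => Nil end) E) as E2.
    cbv beta iota in E1, E2. apply cellT_inj in E2.
    assert (i <= k \/ i = S k) as [Hle | ->] by lia; auto.
Qed.

Lemma pipeT_inj N c c' : pipeT N c = pipeT N c' -> forall i, i <= S N -> c i = c' i.
Proof.
  unfold pipeT. intro E.
  pose proof (f_equal (fun P => match P with Rel _ Q => Q | _ => Nil end) E) as E1.
  cbv beta iota in E1. exact (chainT_inj N (S N) c c' E1).
Qed.

Lemma time_not_admissible N c l (X X2 : ASet) Q1 R' :
  good N c l -> tstep (pipeT N c) X Q1 -> tstep (usersT l) X2 R' -> full_comb X X2 ->
  sumf (fun i => lz (c i)) (S (S N)) <> 0.
Proof.
  intros (G1&G2&G3) HP HU Hc Z.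
  assert (HUrg : forall i, i <= S N -> snd (c i) = true).
  { intros i Hi. pose proof (sumf_ge (fun i => lz (c i)) (S (S N)) i ltac:(lia)) as Hs.
    cbv beta in Hs. unfold lz in Hs, Z. destruct (snd (c i)); auto; lia. }
  apply pipe_tstep in HP as (_&HE&HPin&HPout).
  apply users_tstep in HU as (_&HU0&HU1&HU2).
  destruct (Nat.eq_dec (items N c) 0) as [I0|I0].
  - assert (Fh : fst (c (S N)) = false).
    { pose proof (sumf_ge (fun i => itm (c i)) (S (S N)) (S N) ltac:(lia)) as Hs.
      unfold items in I0. cbv beta in Hs. unfold itm in Hs, I0. destruct (fst (c (S N))); auto; lia. }
    assert (Ec : c (S N) = (false, true)).
    { pose proof (HUrg (S N) ltac:(lia)). destruct (c (S N)); simpl in *; subst; auto. }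
    destruct (classic (In 0 l)) as [H0|H0].
    + destruct (Hc act_in) as [[_ [HX|HX]]|(_&_&Hb)]; [exact (HPin Ec HX)|exact (HU0 H0 HX)|discriminate].
    + assert (~ In 1 l) by (rewrite cnt_In; lia).
      assert (Hall : forall x, In x l -> 2 <= x) by (apply all_ge2; auto).
      destruct (Hc omega) as [[Hb _]|(_&HX&_)]; [apply Hb; reflexivity|exact (HU2 G3 Hall HX)].
  - assert (F0 : fst (c 0) = true) by (apply (all_urgent_front N c); auto; lia).
    assert (Ec : c 0 = (true, true)).
    { pose proof (HUrg 0 ltac:(lia)). destruct (c 0); simpl in *; subst; auto. }
    assert (H1 : In 1 l) by (rewrite cnt_In; lia).
    destruct (Hc act_out) as [[_ [HX|HX]]|(_&_&Hb)]; [exact (HPout Ec HX)|exact (HU1 H1 HX)|discriminate].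
Qed.

Lemma step_dec N Q0 lb Q1 : admissible (PIPE N) Q0 lb Q1 -> ~ is_inout lb ->
  forall c, Q0 = pipeT N c -> exists c', Q1 = pipeT N c' /\ psi N c' < psi N c.
Proof.
  intros Had Hio c ->. destruct lb as [a|X]; simpl in Had.
  - destruct Had as [Ha _]. apply pipe_astep in Ha.
    destruct Ha as [(j&Hj&K1&K2&->&->)|[(K1&->&->)|(K1&->&->)]].
    + exists (fire c j). split; auto. apply psi_fire; auto.
    + exfalso. apply Hio. left. reflexivity.
    + exfalso. apply Hio. right. reflexivity.
  - destruct Had as [Ht (R&X2&R'&Hj&HR&Hc)].
    destruct (joint_inv N _ _ Hj) as (c0&l&E&->&Hg).
    rewrite E in Ht. pose proof (pipeT_inj N c c0 E) as Ecc.
    pose proof (time_not_admissible N c0 l X X2 Q1 R' Hg Ht HR Hc) as NZ.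
    apply pipe_tstep in Ht as (->&_).
    exists (urg c0). split; auto.
    rewrite (psi_ext N c c0) by auto. pose proof (psi_urg N c0). lia.
Qed.

Lemma path_dec N A ls B : apath (PIPE N) A ls B -> ls <> [] -> (forall lb, In lb ls -> ~ is_inout lb) ->
  forall c, A = pipeT N c -> exists c', B = pipeT N c' /\ psi N c' < psi N c.
Proof.
  induction 1; intros Hne Hio c EA; [congruence|].
  destruct (step_dec N _ _ _ H (Hio l (or_introl eq_refl)) c EA) as (c1&E1&P1).
  destruct ls as [|l' ls].
  - inversion H0; subst. eauto.
  - destruct (IHapath ltac:(discriminate) ltac:(intros lb Hlb; apply Hio; right; auto) c1 E1) as (c2&E2&P2).
    exists c2. split; auto. lia.
Qed.

Lemma no_cc N : ~ has_catastrophic_cycle (PIPE N).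
Proof.
  intros (Q0&pre&ls&_&Hc&(lb&Hlb&_)&Hio).
  assert (Hne : ls <> []) by (intro E; subst; destruct Hlb).
  destruct ls as [|l0 ls']; [congruence|].
  assert (Hj : exists R, joint_reach (PIPE N) Q0 R).
  { inversion Hc as [|Q0' l1 Q1 ls1 Q2 Had Hrest]; subst.
    destruct l0; simpl in Had; destruct Had as [_ Had]; [destruct Had as (R&?&_)|destruct Had as (R&_&_&?&_)]; eauto. }
  destruct Hj as (R&Hj). destruct (joint_inv N _ _ Hj) as (c&l&EQ&_&_).
  destruct (path_dec N _ _ _ Hc Hne Hio c EQ) as (c'&E'&P').
  rewrite EQ in E'. rewrite (psi_ext N c' c) in P' by (intros; symmetry; apply pipeT_inj with (N := N); auto).
  lia.
Qed.

Theorem mainTheorem2 (N : nat) (HN : 1 <= N) :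
  ~ has_catastrophic_cycle (PIPE N) /\
  asymptotic_performance (PIPE N) (2 # 1)%Q /\
  (forall n : nat, 1 <= n -> rp (PIPE N) n (fin (2 * n + (N + 1)))).
Proof.
  split; [apply no_cc|]. split; [apply asym|]. intros n Hn. apply rp_main; auto.
Qed.
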